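(* For the controlled SIR-SI o.d.e.\ in the context, let $\sigma$ be an admissible control with $y_\sigma(T_\sigma)>\rho_{\max}$, and let $\hat\tau=\sup\{t\ge0:\sigma(t)>0\}\in(0,\infty]$. Then the time-threshold control $\sigma_{\hat\tau}$ satisfies $C_{\hat\tau}<C_\sigma$.
   Context: Fix $\lambda>0$, $\beta>0$, $\Gamma\in(0,1]$, initial values $0<x_{d0}\le d_0<1$, a target fraction $\alpha\in(0,1)$ and a tradeoff parameter $\psi>0$. Let $(b(t),d(t))$ solve $\dot b=\beta d$, $\dot d=-\beta d+\lambda\Gamma ds$ with $b(0)=0$, $d(0)=d_0$, where $s=1-b-d$; let $a(t)=b(t)+d(t)$ and $a(\infty)=\lim_{t\to\infty}a(t)$. An admissible control is a piecewise Lipschitz continuous function $\sigma:[0,\infty)\to[0,1]$. For such $\sigma$ let $(x_{b,\sigma},x_{d,\sigma},y_\sigma)$ solve $\dot x_b=\beta x_d+\lambda(b-x_b)(x+y)$, $\dot x_d=\Gamma\lambda(d-x_d)y+\Gamma\lambda x_ds+\lambda(d-x_d)(x+y)-\beta x_d$, $\dot y=-\Gamma\lambda dy+\lambda\sigma(t)(s-y)(x_b+y+(1-\Gamma)x_d)$, where $x=x_b+x_d$, with initial value $(0,x_{d0},0)$; write $x_\sigma=x_{b,\sigma}+x_{d,\sigma}$. Target time: $T_\sigma=\inf\{t\ge0:x_\sigma(t)\ge\alpha a(\infty)\}$. Cost: $C_\sigma=\psi y_\sigma(T_\sigma)+T_\sigma$. For $\tau\in[0,\infty]$ the time-threshold control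 is $\sigma_\tau(t)=1$ for $0\le t<\tau$ and $\sigma_\tau(t)=0$ for $t\ge\tau$ (so $\sigma_\infty\equiv1$); write $T_\tau,y_\tau,C_\tau$ for $T_{\sigma_\tau},y_{\sigma_\tau},C_{\sigma_\tau}$. $\rho_{\max}:=\sup_{\tau\ge0}y_\tau(T_\tau)$. *)

(* Defs.v *)
From Stdlib Require Import Reals.
Open Scope R_scope.

Definition cont_nonneg (f : R -> R) : Prop :=
  forall t, 0 <= t -> limit1_in f (fun s => 0 <= s) (f t) t.

Definition SolBD (lambda beta Gamma d0 : R) (b d : R -> R) : Prop :=
  b 0 = 0 /\ d 0 = d0 /\ cont_nonneg b /\ cont_nonneg d /\
  forall t, 0 < t ->
    derivable_pt_lim b t (beta * d t) /\
    derivable_pt_lim d t (- beta * d t + lambda * Gamma * d t * (1 - b t - d t)).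

(* (xb,xd,y) solves the controlled system for control sigma on [0,oo), with
   initial value (0, xd0, 0): continuous on [0,oo) and satisfying the o.d.e.
   at every t > 0 where sigma is continuous (for a piecewise Lipschitz
   control these exceptional points are locally finite). *)
Definition SolX (lambda beta Gamma xd0 : R) (b d sigma : R -> R)
    (xb xd y : R -> R) : Prop :=
  xb 0 = 0 /\ xd 0 = xd0 /\ y 0 = 0 /\
  cont_nonneg xb /\ cont_nonneg xd /\ cont_nonneg y /\
  forall t, 0 < t -> continuity_pt sigma t ->
    let s := 1 - b t - d t in
    let x := xb t + xd t in
    derivable_pt_lim xb t (beta * xd t + lambda * (b t - xb t) * (x + y t)) /\
    derivable_pt_lim xd t
      (Gamma * lambda * (d t - xd t) * y t + Gamma * lambda * xd t * s
       + lambda * (d t - xd t) * (x + y t) - beta * xd t) /\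
    derivable_pt_lim y t
      (- Gamma * lambda * d t * y t
       + lambda * sigma t * (s - y t) * (xb t + y t + (1 - Gamma) * xd t)).

Definition lim_infty (a : R -> R) (l : R) : Prop :=
  forall eps, eps > 0 -> exists M, forall t, t >= M -> Rabs (a t - l) < eps.

Definition admissible (sigma : R -> R) : Prop :=
  (forall t, 0 <= t -> 0 <= sigma t <= 1) /\
  exists tn : nat -> R,
    tn 0%nat = 0 /\ (forall n, tn n < tn (S n)) /\
    (forall M, exists n, tn n > M) /\
    forall n, exists L, forall s u,
      tn n <= s < tn (S n) -> tn n <= u < tn (S n) ->
      Rabs (sigma s - sigma u) <= L * Rabs (s - u).

(* Time-threshold control sigma_tau; None encodes tau = oo. *)
Definition threshold (tau : option R) (t : R) : R :=
  match tau with
  | None => 1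
  | Some r => if Rlt_dec t r then 1 else 0
  end.

(* T = inf { t >= 0 : x t >= A } (a real number; this forces the set to be
   nonempty). *)
Definition IsTargetTime (x : R -> R) (A T : R) : Prop :=
  (forall t, 0 <= t -> A <= x t -> T <= t) /\
  (forall T', (forall t, 0 <= t -> A <= x t -> T' <= t) -> T' <= T).

(* th = sup { t >= 0 : sigma t > 0 } in (-oo, oo]; None encodes oo. *)
Definition SupPosTime (sigma : R -> R) (th : option R) : Prop :=
  match th with
  | None => forall M, exists t, 0 <= t /\ M < t /\ sigma t > 0
  | Some r => is_lub (fun t => 0 <= t /\ sigma t > 0) r
  end.

Definition RhoSet (lambda beta Gamma xd0 alpha ainf : R) (b d : R -> R)
    (v : R) : Prop :=
  exists tau xb xd y T, 0 <= tau /\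
    SolX lambda beta Gamma xd0 b d (threshold (Some tau)) xb xd y /\
    IsTargetTime (fun t => xb t + xd t) (alpha * ainf) T /\
    v = y T.

(* Main.v *)
Require Import Defs.
From Stdlib Require Import Reals Lra Lia Psatz List Classical ClassicalEpsilon.
From Coquelicot Require Import Coquelicot.
Open Scope R_scope.

Definition contR (a : R) (f : R -> R) : Prop :=
  forall t, a <= t -> limit1_in f (fun s => a <= s) (f t) t.

Definition ext (a : R) (f : R -> R) : R -> R := fun t => f (Rmax a t).

Lemma ext_cont a f : contR a f -> forall t, continuity_pt (ext a f) t.
Proof.
  intros H t. unfold continuity_pt, continue_in, limit1_in, limit_in.
  intros eps Heps. destruct (H (Rmax a t) (Rmax_l a t) eps Heps) as [alp [Ha Hal]].
  exists alp; split; auto. intros x [_ Hx]. unfold ext. apply Hal. split.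
  apply Rmax_l. simpl in *. unfold R_dist in *.
  unfold Rmax; destruct (Rle_dec a x); destruct (Rle_dec a t);
    repeat (apply Rabs_def1 || apply Rabs_def2 in Hx); try lra;
    apply Rabs_def2 in Hx; apply Rabs_def1; lra.
Qed.

Lemma contR_pt a f t : contR a f -> a < t -> continuity_pt f t.
Proof.
  intros H Ht. unfold continuity_pt, continue_in, limit1_in, limit_in.
  intros eps Heps. destruct (H t (Rlt_le _ _ Ht) eps Heps) as [alp [Ha Hal]].
  exists (Rmin alp (t - a)); split. apply Rmin_pos; lra.
  intros x [_ Hx]. simpl in *. unfold R_dist in *. apply Hal. split.
  apply Rabs_def2 in Hx. assert (Rmin alp (t-a) <= t - a) by apply Rmin_r. lra.
  simpl; unfold R_dist. assert (Rmin alp (t-a) <= alp) by apply Rmin_l. lra.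
Qed.

Lemma ext_eq a f t : a <= t -> ext a f t = f t.
Proof. intros; unfold ext; rewrite Rmax_right; auto. Qed.

Lemma bound_lemma a f K : contR a f -> exists M, forall t, a <= t <= K -> Rabs (f t) <= M.
Proof.
  intros H. destruct (Rle_dec a K) as [aK|aK].
  - destruct (continuity_ab_maj (fun t => Rabs (ext a f t)) a K aK) as [Mx [HM _]].
    { intros c _. apply (continuity_pt_comp (ext a f) Rabs). apply ext_cont; auto.
      apply Rcontinuity_abs. }
    exists (Rabs (ext a f Mx)). intros t Ht. rewrite <- (ext_eq a f t) by lra. apply HM; auto.
  - exists 0. intros; lra.
Qed.

Lemma IL0 f C s t : s < t ->
  (forall x, s <= x <= t -> continuity_pt f x) ->
  (forall x, s < x < t -> exists f', derivable_pt_lim f x f' /\ -C <= f') ->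
  -C * (t - s) <= f t - f s.
Proof.
  intros Hst Hc Hd.
  assert (pr1 : forall c, s < c < t -> derivable_pt f c).
  { intros c Pc. destruct (constructive_indefinite_description _ (Hd c Pc)) as [l [Hl _]].
    exists l; exact Hl. }
  assert (pr2 : forall c, s < c < t -> derivable_pt id c).
  { intros c _. apply derivable_pt_id. }
  destruct (MVT f id s t pr1 pr2 Hst Hc) as [c [P HP]].
  { intros; apply derivable_continuous_pt, derivable_pt_id. }
  destruct (Hd c P) as [f' [Hf' Hle]].
  rewrite (derive_pt_eq_0 f c f' (pr1 c P) Hf') in HP.
  rewrite (derive_pt_eq_0 id c 1 (pr2 c P) (derivable_pt_lim_id c)) in HP.
  unfold id in HP. nra.
Qed.

Lemma IL (l : list R) : forall f C s t, s <= t ->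
  (forall x, s <= x <= t -> continuity_pt f x) ->
  (forall x, s < x < t -> ~ In x l -> exists f', derivable_pt_lim f x f' /\ -C <= f') ->
  -C * (t - s) <= f t - f s.
Proof.
  induction l as [|p l IH]; intros f C s t Hst Hc Hd.
  - destruct (Req_dec s t) as [e|ne]. subst; lra.
    apply IL0; [lra|exact Hc|]. intros x Hx; apply Hd; auto.
  - destruct (classic (s < p < t)) as [Hp|Hp].
    + assert (H1 : -C * (p - s) <= f p - f s).
      { apply IH; try lra. intros; apply Hc; lra.
        intros x Hx Hn. apply Hd; [lra|]. simpl. intros [e|e]; [lra|tauto]. }
      assert (H2 : -C * (t - p) <= f t - f p).
      { apply IH; try lra. intros; apply Hc; lra.
        intros x Hx Hn. apply Hd; [lra|]. simpl. intros [e|e]; [lra|tauto]. }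
      lra.
    + apply IH; auto. intros x Hx Hn. apply Hd; auto. simpl. intros [e|e]; [subst; tauto|tauto].
Qed.

Definition negpart (x : R) := Rmax 0 (- x).
Fixpoint negs (g : nat -> R -> R) (k : nat) (t : R) : R :=
  match k with O => 0 | S k' => negs g k' t + negpart (g k' t) end.

Lemma negpart_ge0 x : 0 <= negpart x.
Proof. unfold negpart; apply Rmax_l. Qed.
Lemma negpart_ge x : - x <= negpart x.
Proof. unfold negpart; apply Rmax_r. Qed.
Lemma negpart_pos x : 0 <= x -> negpart x = 0.
Proof. intros; unfold negpart; rewrite Rmax_left; lra. Qed.
Lemma negpart_neg x : x <= 0 -> negpart x = - x.
Proof. intros; unfold negpart; rewrite Rmax_right; lra. Qed.

Lemma negs_le g k t M : (forall j, (j < k)%nat -> negpart (g j t) <= M) -> negs g k t <= INR k * M.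
Proof.
  induction k; intros H; simpl negs. simpl INR. lra.
  rewrite S_INR. assert (negs g k t <= INR k * M) by (apply IHk; intros; apply H; lia).
  assert (negpart (g k t) <= M) by (apply H; lia). lra.
Qed.

Lemma negs_ge g k t j : (j < k)%nat -> negpart (g j t) <= negs g k t.
Proof.
  induction k; intros H; simpl. lia.
  destruct (Nat.eq_dec j k). subst.
  assert (0 <= negs g k t). { clear. induction k; simpl. lra. pose proof (negpart_ge0 (g k t)); lra. }
  lra. pose proof (negpart_ge0 (g k t)). assert (negpart (g j t) <= negs g k t) by (apply IHk; lia). lra.
Qed.

Lemma negs_ge0 g k t : 0 <= negs g k t.
Proof. induction k; simpl. lra. pose proof (negpart_ge0 (g k t)); lra. Qed.

Lemma neg_near a f s : contR a f -> a <= s -> f s < 0 ->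
  exists d, 0 < d /\ forall r, a <= r -> s - d < r < s + d -> f r < 0.
Proof.
  intros H Ha Hs. destruct (H s Ha (- f s)) as [alp [Hal Hr]]. lra.
  exists alp; split; auto. intros r Hr1 Hr2. 
  destruct (Req_dec r s). subst; auto.
  assert (Hd : dist R_met (f r) (f s) < - f s). apply Hr. split; auto.
  simpl; unfold R_dist. apply Rabs_def1; lra.
  simpl in Hd; unfold R_dist in Hd. apply Rabs_def2 in Hd. lra.
Qed.

Lemma derivable_ext a f x l : a < x -> derivable_pt_lim f x l -> derivable_pt_lim (ext a f) x l.
Proof.
  intros Hx Hd. apply is_derive_Reals. apply is_derive_Reals in Hd.
  apply (is_derive_ext_loc f). 2: exact Hd.
  exists (mkposreal (x - a) ltac:(lra)). intros y Hy. simpl in Hy.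
  unfold ball in Hy; simpl in Hy; unfold AbsRing_ball, abs, minus, plus, opp in Hy; simpl in Hy.
  apply Rabs_def2 in Hy. unfold ext. rewrite Rmax_right; lra.
Qed.

Lemma unif_bound a (g : nat -> R -> R) k K : (forall i, (i < k)%nat -> contR a (g i)) ->
  exists M, forall j t, (j < k)%nat -> a <= t <= K -> Rabs (g j t) <= M.
Proof.
  induction k; intros H. exists 0; intros; lia.
  destruct IHk as [M1 HM1]. intros; apply H; lia.
  destruct (bound_lemma a (g k) K) as [M2 HM2]. apply H; lia.
  exists (Rmax M1 M2). intros j t Hj Ht.
  destruct (Nat.eq_dec j k). subst. eapply Rle_trans. apply HM2; auto. apply Rmax_r.
  eapply Rle_trans. apply HM1; auto; lia. apply Rmax_l.
Qed.

Lemma PL a (g : nat -> R -> R) k :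
  (forall i, (i < k)%nat -> contR a (g i)) ->
  (forall i, (i < k)%nat -> 0 <= g i a) ->
  (forall K, exists L l, 0 <= L /\ forall t, a < t <= K -> ~ In t l ->
      forall i, (i < k)%nat -> g i t < 0 ->
      exists g', derivable_pt_lim (g i) t g' /\ - L * negs g k t <= g') ->
  forall i t, (i < k)%nat -> a <= t -> 0 <= g i t.
Proof.
  intros Hc H0 Hd. apply NNPP. intro Hn.
  apply not_all_ex_not in Hn as [i Hn]. apply not_all_ex_not in Hn as [t1 Hn].
  apply imply_to_and in Hn as [Hik Hn]. apply imply_to_and in Hn as [Hat1 Hn].
  apply Rnot_le_lt in Hn.
  destruct (Hd t1) as [L [l [HL HLd]]].
  set (A := fun t => a <= t <= t1 /\ forall s, a <= s <= t -> forall j, (j < k)%nat -> 0 <= g j s).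
  destruct (completeness A) as [t0 [Hub Hlub]].
  { exists t1. intros x [Hx _]; lra. }
  { exists a. split. lra. intros s Hs j Hj. replace s with a by lra. auto. }
  assert (Ha0 : a <= t0). { apply Hub. split. lra. intros s Hs j Hj. replace s with a by lra. auto. }
  assert (Ht01 : t0 <= t1). { apply Hlub. intros x [Hx _]; lra. }
  assert (F1 : forall s, a <= s < t0 -> forall j, (j < k)%nat -> 0 <= g j s).
  { intros s Hs j Hj. apply NNPP. intro Hneg.
    assert (Hs' : is_upper_bound A s).
    { intros x [Hx1 Hx2]. apply Rnot_lt_le. intro Hlt. apply Hneg. apply Hx2; auto. lra. }
    apply Hlub in Hs'. lra. }
  assert (F2 : forall j, (j < k)%nat -> 0 <= g j t0).
  { intros j Hj. destruct (Req_dec t0 a) as [e|ne]. rewrite e; auto.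
    apply Rnot_lt_le. intro Hlt. destruct (neg_near a (g j) t0) as [dl [Hdl Hdl2]]; auto.
    pose (r := Rmax a (t0 - dl/2)).
    assert (a <= r) by apply Rmax_l. assert (t0 - dl/2 <= r) by apply Rmax_r.
    assert (r < t0). { unfold r; unfold Rmax; destruct (Rle_dec a (t0 - dl/2)); lra. }
    specialize (Hdl2 r H ltac:(lra)). specialize (F1 r ltac:(lra) j Hj). lra. }
  assert (Ht0 : t0 < t1). { destruct (Req_dec t0 t1). subst. specialize (F2 i Hik). lra. lra. }
  set (h := Rmin (t1 - t0) (1 / (2 * (INR k * L + 1)))).
  assert (HkL : 0 <= INR k * L) by (apply Rmult_le_pos; auto; apply pos_INR).
  assert (Hh : 0 < h). { unfold h. apply Rmin_pos. lra. apply Rdiv_lt_0_compat; lra. }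
  assert (Hh1 : h <= t1 - t0) by apply Rmin_l.
  assert (Hh2 : h <= 1 / (2 * (INR k * L + 1))) by apply Rmin_r.
  assert (Hh3 : INR k * L * h <= 1/2).
  { apply Rmult_le_compat_l with (r := INR k * L) in Hh2; auto.
    eapply Rle_trans. exact Hh2. 
    apply Rmult_le_reg_l with (r := 2 * (INR k * L + 1)). lra.
    field_simplify; lra. }
  destruct (unif_bound a g k t1 Hc) as [B HB].
  set (S := fun v => exists j t, (j < k)%nat /\ t0 <= t <= t0 + h /\ v = negpart (g j t)).
  destruct (completeness S) as [M [HMub HMlub]].
  { exists (B + 1). intros v [j [t [Hj [Ht ->]]]]. specialize (HB j t Hj ltac:(lra)).
    unfold negpart. apply Rmax_lub. pose proof (Rabs_pos (g j t)); lra.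
    pose proof (Rle_abs (- g j t)). rewrite Rabs_Ropp in H. lra. }
  { exists (negpart (g i t0)). exists i, t0. repeat split; auto; lra. }
  assert (HM0 : 0 <= M).
  { eapply Rle_trans. apply (negpart_ge0 (g i t0)). apply HMub. exists i, t0. repeat split; auto; lra. }
  assert (Claim : forall j t, (j < k)%nat -> t0 <= t <= t0 + h -> negpart (g j t) <= M / 2).
  { intros j t Hj Ht. destruct (Rle_dec 0 (g j t)) as [Hp|Hp].
    rewrite negpart_pos; auto. lra. apply Rnot_le_lt in Hp.
    assert (Htt0 : t0 < t). { destruct (Req_dec t t0). subst. specialize (F2 j Hj). lra. lra. }
    set (Z := fun r => t0 <= r <= t /\ 0 <= g j r).
    destruct (completeness Z) as [s [Hsub Hslub]].
    { exists t. intros x [Hx _]; lra. }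
    { exists t0. split. lra. auto. }
    assert (Hs0 : t0 <= s). { apply Hsub. split. lra. auto. }
    assert (Hs1 : s <= t). { apply Hslub. intros x [Hx _]; lra. }
    assert (Hgs : 0 <= g j s).
    { destruct (Req_dec s t0) as [e|ne]. rewrite e; auto.
      apply Rnot_lt_le. intro Hlt. destruct (neg_near a (g j) s) as [dl [Hdl Hdl2]]; auto. lra.
      assert (Hnub : ~ is_upper_bound Z (Rmax t0 (s - dl/2))).
      { intro Hu. apply Hslub in Hu. unfold Rmax in Hu; destruct (Rle_dec t0 (s - dl/2)); lra. }
      apply Hnub. intros x [Hx1 Hx2]. apply Rnot_lt_le. intro Hlt2.
      assert (x <= s) by (apply Hsub; split; auto).
      assert (t0 <= Rmax t0 (s - dl / 2)) by apply Rmax_l.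
      assert (s - dl/2 <= Rmax t0 (s - dl / 2)) by apply Rmax_r.
      specialize (Hdl2 x ltac:(lra) ltac:(lra)). lra. }
    assert (Hst : s < t). { destruct (Req_dec s t). subst. lra. lra. }
    assert (Hneg : forall r, s < r <= t -> g j r < 0).
    { intros r Hr. apply Rnot_le_lt. intro Hr2. assert (r <= s) by (apply Hsub; split; auto; lra). lra. }
    assert (HIL := IL l (ext a (g j)) (L * INR k * M) s t (Rlt_le _ _ Hst)
                   (fun x _ => ext_cont a (g j) (Hc j Hj) x)).
    assert (HI : - (L * INR k * M) * (t - s) <= ext a (g j) t - ext a (g j) s).
    { apply HIL. intros x Hx Hnl.
      destruct (HLd x ltac:(lra) Hnl j Hj (Hneg x ltac:(lra))) as [g' [Hg' Hg'2]].
      exists g'. split. apply derivable_ext; auto. lra.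
      assert (negs g k x <= INR k * M).
      { apply negs_le. intros j' Hj'. apply HMub. exists j', x. repeat split; auto; lra. }
      assert (L * negs g k x <= L * (INR k * M)) by (apply Rmult_le_compat_l; auto). lra. }
    rewrite !ext_eq in HI by lra.
    rewrite negpart_neg by lra.
    assert (INR k * L * h * M <= 1/2 * M) by (apply Rmult_le_compat_r; auto).
    assert (L * INR k * M * (t - s) <= L * INR k * M * h).
    { apply Rmult_le_compat_l. apply Rmult_le_pos; auto. apply Rmult_le_pos; auto. apply pos_INR. lra. }
    nra. }
  assert (HMle : M <= M / 2).
  { apply HMlub. intros v [j [t [Hj [Ht ->]]]]. apply Claim; auto. }
  assert (HA : A (t0 + h)).
  { split. lra. intros s Hs j Hj. destruct (Rlt_dec s t0). apply F1; auto; lra.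
    assert (negpart (g j s) <= M / 2) by (apply Claim; auto; lra).
    pose proof (negpart_ge (g j s)). lra. }
  apply Hub in HA. lra.
Qed.

Lemma unif_bound' a (g : nat -> R -> R) k K : (forall i, (i < k)%nat -> contR a (g i)) ->
  exists M, 0 <= M /\ forall j t, (j < k)%nat -> a <= t <= K -> Rabs (g j t) <= M.
Proof.
  intros H. destruct (unif_bound a g k K H) as [M HM]. exists (Rmax M 0). split. apply Rmax_r.
  intros. eapply Rle_trans. apply HM; auto. apply Rmax_l.
Qed.


Lemma dmin f g t a b : derivable_pt_lim f t a -> derivable_pt_lim g t b ->
  derivable_pt_lim (fun x => f x - g x) t (a - b).
Proof. intros; exact (derivable_pt_lim_minus f g t a b H H0). Qed.
Lemma dplus f g t a b : derivable_pt_lim f t a -> derivable_pt_lim g t b ->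
  derivable_pt_lim (fun x => f x + g x) t (a + b).
Proof. intros; exact (derivable_pt_lim_plus f g t a b H H0). Qed.
Lemma dconst c t : derivable_pt_lim (fun _ => c) t 0.
Proof. exact (derivable_pt_lim_const c t). Qed.

Lemma cminus a f g : contR a f -> contR a g -> contR a (fun x => f x - g x).
Proof. intros Hf Hg t Ht. apply limit_minus; auto. Qed.
Lemma cplus a f g : contR a f -> contR a g -> contR a (fun x => f x + g x).
Proof. intros Hf Hg t Ht. apply limit_plus; auto. Qed.
Lemma cconst a c : contR a (fun _ => c).
Proof. intros t Ht eps He. exists 1. split. lra. intros. simpl. unfold R_dist. rewrite Rminus_diag, Rabs_R0. auto. Qed.

Lemma tn_locate (tn : nat -> R) : tn 0%nat = 0 -> (forall n, tn n < tn (S n)) ->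
  forall n t, 0 <= t < tn n -> exists m, (m < n)%nat /\ tn m <= t < tn (S m).
Proof.
  intros H0 Hinc. induction n; intros t Ht. lra.
  destruct (Rlt_dec t (tn n)). destruct (IHn t) as [m [Hm1 Hm2]]. lra. exists m; split; auto.
  exists n. split. lia. lra.
Qed.

Lemma adm_list sigma : admissible sigma -> forall K, exists l : list R,
  forall t, 0 < t <= K -> ~ In t l -> continuity_pt sigma t.
Proof.
  intros [_ [tn [H0 [Hinc [Hunb Hlip]]]]] K.
  destruct (Hunb K) as [n Hn].
  exists (map tn (seq 0 (S n))). intros t Ht Hnin.
  destruct (tn_locate tn H0 Hinc n t) as [m [Hm1 Hm2]]. lra.
  assert (Hne : tn m <> t). { intro e. apply Hnin. rewrite <- e. apply in_map. apply in_seq. lia. }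
  assert (Hlt : tn m < t) by lra.
  destruct (Hlip m) as [L HL].
  unfold continuity_pt, continue_in, limit1_in, limit_in. intros eps Heps.
  exists (Rmin (Rmin (t - tn m) (tn (S m) - t)) (eps / (Rabs L + 1))). split.
  apply Rmin_pos. apply Rmin_pos; lra. apply Rdiv_lt_0_compat; auto. pose proof (Rabs_pos L); lra.
  intros x [_ Hx]. simpl in *. unfold R_dist in *.
  assert (H1 : Rmin (Rmin (t - tn m) (tn (S m) - t)) (eps / (Rabs L + 1)) <= Rmin (t - tn m) (tn (S m) - t)) by apply Rmin_l.
  assert (H2 : Rmin (Rmin (t - tn m) (tn (S m) - t)) (eps / (Rabs L + 1)) <= eps / (Rabs L + 1)) by apply Rmin_r.
  assert (H3 : Rmin (t - tn m) (tn (S m) - t) <= t - tn m) by apply Rmin_l.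
  assert (H4 : Rmin (t - tn m) (tn (S m) - t) <= tn (S m) - t) by apply Rmin_r.
  assert (Hx' := Hx). apply Rabs_def2 in Hx'.
  eapply Rle_lt_trans. apply HL; lra.
  assert (Rabs L * Rabs (x - t) <= Rabs L * (eps / (Rabs L + 1))).
  { apply Rmult_le_compat_l. apply Rabs_pos. lra. }
  assert (Rabs L * (eps / (Rabs L + 1)) < eps).
  { pose proof (Rabs_pos L). apply Rmult_lt_reg_r with (Rabs L + 1). lra.
    field_simplify; nra. }
  pose proof (Rle_abs L). 
  assert (L * Rabs (x - t) <= Rabs L * Rabs (x - t)) by (apply Rmult_le_compat_r; [apply Rabs_pos|auto]).
  lra.
Qed.

Lemma thr_cont r t : t <> r -> continuity_pt (threshold (Some r)) t.
Proof.
  intros Hne. unfold continuity_pt, continue_in, limit1_in, limit_in. intros eps Heps.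
  exists (Rabs (t - r)). split. apply Rabs_pos_lt; lra.
  intros x [_ Hx]. simpl in *. unfold R_dist in *. unfold threshold.
  apply Rabs_def2 in Hx. destruct (Rle_dec 0 (t - r)).
  - rewrite Rabs_right in Hx by lra.
    destruct (Rlt_dec x r); destruct (Rlt_dec t r); try (rewrite Rminus_diag, Rabs_R0; lra); lra.
  - rewrite Rabs_left in Hx by lra.
    destruct (Rlt_dec x r); destruct (Rlt_dec t r); try (rewrite Rminus_diag, Rabs_R0; lra); lra.
Qed.

Lemma thr_list (tau : option R) : forall K, exists l : list R,
  forall t, 0 < t <= K -> ~ In t l -> continuity_pt (threshold tau) t.
Proof.
  intros K. destruct tau as [r|].
  - exists (r :: nil). intros t Ht Hn. apply thr_cont. intro e; apply Hn; left; auto.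
  - exists nil. intros. simpl. apply continuity_pt_const. intros a b; auto.
Qed.

Lemma own_lb c p Kc : p < 0 -> Rabs c <= Kc -> - Kc * negpart p <= c * p.
Proof.
  intros Hp Hc. rewrite negpart_neg by lra.
  destruct (Rle_dec 0 c). rewrite Rabs_right in Hc by lra. nra.
  rewrite Rabs_left in Hc by lra. nra.
Qed.
Lemma cross_lb c p : 0 <= c -> - c * negpart p <= c * p.
Proof.
  intros Hc. pose proof (negpart_ge p). pose proof (negpart_ge0 p). nra.
Qed.
Lemma prod_lb c p q M : 0 <= c -> Rabs p <= M -> Rabs q <= M ->
  - (c * M) * (negpart p + negpart q) <= c * (p * q).
Proof.
  intros Hc Hp Hq. assert (p * q >= - M * (negpart p + negpart q)).
  { destruct (Rle_dec 0 p); destruct (Rle_dec 0 q).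
    - pose proof (negpart_ge0 p); pose proof (negpart_ge0 q). pose proof (Rabs_pos p). nra.
    - rewrite (negpart_pos p), (negpart_neg q) by lra. rewrite Rabs_right in Hp by lra. nra.
    - rewrite (negpart_neg p), (negpart_pos q) by lra. rewrite Rabs_right in Hq by lra. nra.
    - rewrite (negpart_neg p), (negpart_neg q) by lra. pose proof (Rabs_pos p). nra. }
  nra.
Qed.

Section BD.
Variables (lambda beta Gamma d0 : R) (b d : R -> R).
Hypotheses (Hlam : 0 < lambda) (Hbeta : 0 < beta) (HG : 0 < Gamma <= 1)
  (Hd0 : 0 < d0 < 1) (Hbd : SolBD lambda beta Gamma d0 b d).

Definition gbd (j : nat) : R -> R := match j with
  | O => d | _ => fun t => 1 - b t - d t end.

Lemma bd_pos : forall t, 0 <= t -> 0 <= d t /\ 0 <= 1 - b t - d t.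
Proof.
  destruct Hbd as [Hb0 [Hdd0 [Hcb [Hcd Hder]]]].
  assert (Hc : forall i, (i < 2)%nat -> contR 0 (gbd i)).
  { intros [|[|i]] Hi; simpl. exact Hcd. apply cminus. apply cminus. apply cconst. exact Hcb. exact Hcd. lia. }
  assert (Hi0 : forall i, (i < 2)%nat -> 0 <= gbd i 0).
  { intros [|[|i]] Hi; simpl; [lra|rewrite Hb0, Hdd0; lra|lia]. }
  assert (Hdv : forall K, exists L l, 0 <= L /\ forall t, 0 < t <= K -> ~ In t l ->
      forall i, (i < 2)%nat -> gbd i t < 0 ->
      exists g', derivable_pt_lim (gbd i) t g' /\ - L * negs gbd 2 t <= g').
  { intros K. destruct (unif_bound' 0 gbd 2 K Hc) as [M [HM0p HM]].
    exists (beta + lambda * Gamma * M + lambda * Gamma * M), nil. split. { assert (0 <= lambda * Gamma * M) by (apply Rmult_le_pos; [nra|auto]). lra. }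
    intros t0 Ht0 _ i Hi Hneg.
    destruct (Hder t0 ltac:(lra)) as [Hdb Hdd].
    assert (HM0 := HM 0%nat t0 ltac:(lia) ltac:(lra)); assert (HM1 := HM 1%nat t0 ltac:(lia) ltac:(lra)).
    simpl in HM0, HM1.
    assert (Hn0 := negpart_ge0 (d t0)). assert (Hn1 := negpart_ge0 (1 - b t0 - d t0)).
    assert (HlG : 0 <= lambda * Gamma) by nra.
    destruct i as [|[|i]]; simpl in Hneg |- *; [|clear Hi|lia].
    - exists (- beta * d t0 + lambda * Gamma * d t0 * (1 - b t0 - d t0)); split; auto.
      replace (- beta * d t0 + lambda * Gamma * d t0 * (1 - b t0 - d t0)) with
        ((-beta + lambda * Gamma * (1 - b t0 - d t0)) * d t0) by ring.
      assert (Hk : Rabs (-beta + lambda * Gamma * (1 - b t0 - d t0)) <= beta + lambda * Gamma * M).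
      { eapply Rle_trans. apply Rabs_triang. rewrite Rabs_Ropp, Rabs_right by lra.
        rewrite Rabs_mult, (Rabs_right (lambda * Gamma)) by lra.
        assert (lambda * Gamma * Rabs (1 - b t0 - d t0) <= lambda * Gamma * M) by (apply Rmult_le_compat_l; auto).
        lra. }
      pose proof (own_lb _ _ _ Hneg Hk).
      assert (lambda * Gamma * M * (0 + negpart (d t0) + negpart (1 - b t0 - d t0)) >= 0).
      { apply Rle_ge. apply Rmult_le_pos; nra. }
      assert ((beta + lambda * Gamma * M) * negpart (d t0) <= (beta + lambda * Gamma * M) * (0 + negpart (d t0) + negpart (1 - b t0 - d t0))).
      { apply Rmult_le_compat_l; nra. }
      nra.
    - exists (0 - beta * d t0 - (- beta * d t0 + lambda * Gamma * d t0 * (1 - b t0 - d t0))); split.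
      apply dmin; [apply dmin; [apply dconst|auto]|auto].
      replace (0 - beta * d t0 - (- beta * d t0 + lambda * Gamma * d t0 * (1 - b t0 - d t0))) with
        ((- (lambda * Gamma * d t0)) * (1 - b t0 - d t0)) by ring.
      assert (Hk : Rabs (- (lambda * Gamma * d t0)) <= lambda * Gamma * M).
      { rewrite Rabs_Ropp, Rabs_mult, (Rabs_right (lambda * Gamma)) by lra.
        apply Rmult_le_compat_l; auto. }
      pose proof (own_lb _ _ _ Hneg Hk).
      assert ((beta + lambda * Gamma * M) * (0 + negpart (d t0) + negpart (1 - b t0 - d t0)) >= 0).
      { apply Rle_ge. apply Rmult_le_pos; nra. }
      assert ((lambda * Gamma * M) * negpart (1 - b t0 - d t0) <= (lambda * Gamma * M) * (0 + negpart (d t0) + negpart (1 - b t0 - d t0))).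
      { apply Rmult_le_compat_l; nra. }
      nra. }
  intros t Ht. split.
  apply (PL 0 gbd 2 Hc Hi0 Hdv 0%nat t); auto.
  apply (PL 0 gbd 2 Hc Hi0 Hdv 1%nat t); auto.
Qed.

End BD.

Lemma IL_from a f C t : contR a f -> a <= t ->
  (forall x, a < x < t -> exists f', derivable_pt_lim f x f' /\ -C <= f') ->
  -C * (t - a) <= f t - f a.
Proof.
  intros Hc Ht Hd. rewrite <- (ext_eq a f t) by lra. rewrite <- (ext_eq a f a) by lra.
  apply (IL nil); auto. intros; apply ext_cont; auto.
  intros x Hx _. destruct (Hd x Hx) as [f' [H1 H2]]. exists f'; split; auto.
  apply derivable_ext; auto; lra.
Qed.

Lemma b_nonneg lambda beta Gamma d0 b d : 0 < lambda -> 0 < beta -> 0 < Gamma <= 1 -> 0 < d0 < 1 ->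
  SolBD lambda beta Gamma d0 b d -> forall t, 0 <= t -> 0 <= b t.
Proof.
  intros Hl Hb HG Hd0 Hbd t Ht. pose proof (bd_pos lambda beta Gamma d0 b d Hl Hb HG Hd0 Hbd) as Hp.
  destruct Hbd as [Hb0 [Hdd0 [Hcb [Hcd Hder]]]].
  assert (H := IL_from 0 b 0 t Hcb Ht).
  assert (-0 * (t - 0) <= b t - b 0). apply H. intros x Hx. exists (beta * d x). split. apply Hder; lra.
  destruct (Hp x ltac:(lra)). nra. lra.
Qed.

Lemma crossQ c p Q : 0 <= c <= Q -> - Q * negpart p <= c * p.
Proof. intros. pose proof (negpart_ge p). pose proof (negpart_ge0 p). nra. Qed.
Lemma prodQ c p q M Q : 0 <= c -> c * M <= Q -> Rabs p <= M -> Rabs q <= M ->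
  - Q * (negpart p + negpart q) <= c * (p * q).
Proof.
  intros. pose proof (prod_lb c p q M H H1 H2). pose proof (negpart_ge0 p). pose proof (negpart_ge0 q). nra.
Qed.

Lemma abs_bd x M : Rabs x <= M -> - M <= x <= M.
Proof. intros H. pose proof (Rle_abs x). pose proof (Rle_abs (-x)). rewrite Rabs_Ropp in H1. lra. Qed.
Lemma ownQ c p Kc : p < 0 -> - Kc <= c <= Kc -> - Kc * negpart p <= c * p.
Proof. intros Hp Hc. rewrite negpart_neg by lra. nra. Qed.

Lemma bnd_mul a A x X : 0 <= a <= A -> - X <= x <= X -> - (A * X) <= a * x <= A * X.
Proof. intros. assert (0 <= X) by lra. split; nra. Qed.

Lemma frac_bd a l : 0 <= a <= 1 -> 0 < l -> 0 <= a * l <= l /\ 0 <= l * a <= l.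
Proof. intros. split; split; nra. Qed.
Lemma mul_le_self a c : 0 <= a -> 0 <= c <= 1 -> a * c <= a.
Proof. intros. nra. Qed.

Lemma thr_cont_None t : continuity_pt (threshold None) t.
Proof. simpl. apply continuity_pt_const. intros a b; auto. Qed.


Section Inv.
Variables (lambda beta Gamma d0 xd0 : R) (b d sigma xb xd y : R -> R).
Hypotheses (Hlam : 0 < lambda) (Hbeta : 0 < beta) (HG : 0 < Gamma <= 1)
  (Hx0 : 0 < xd0 <= d0) (Hd0 : d0 < 1) (Hbd : SolBD lambda beta Gamma d0 b d)
  (Hs01 : forall t, 0 <= t -> 0 <= sigma t <= 1)
  (Hsl : forall K, exists l : list R, forall t, 0 < t <= K -> ~ In t l -> continuity_pt sigma t)
  (Hsol : SolX lambda beta Gamma xd0 b d sigma xb xd y).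

Definition gin (j : nat) : R -> R := match j with
  | O => xb | 1 => xd | 2 => y | 3 => fun t => b t - xb t | 4 => fun t => d t - xd t
  | _ => fun t => 1 - b t - d t - y t end.

Lemma inv_all : forall i t, (i < 6)%nat -> 0 <= t -> 0 <= gin i t.
Proof.
  destruct Hbd as [Hb0 [Hdd0 [Hcb [Hcd Hbder]]]].
  destruct Hsol as [Hxb0 [Hxd0 [Hy0 [Hcxb [Hcxd [Hcy Hder]]]]]].
  assert (Hc : forall i, (i < 6)%nat -> contR 0 (gin i)).
  { intros [|[|[|[|[|[|i]]]]]] Hi; simpl; try lia; auto; repeat apply cminus; auto; apply cconst. }
  assert (Hi0 : forall i, (i < 6)%nat -> 0 <= gin i 0).
  { intros [|[|[|[|[|[|i]]]]]] Hi; simpl; try lia; rewrite ?Hb0, ?Hdd0, ?Hxb0, ?Hxd0, ?Hy0; lra. }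
  apply PL; auto.
  intros K. destruct (unif_bound' 0 gin 6 K Hc) as [M [HM0 HM]]. destruct (Hsl K) as [l Hl].
  set (Q := (beta + lambda) * (6 * M + 1)).
  assert (HQ : 0 <= Q) by (unfold Q; nra).
  assert (HbQ : beta <= Q) by (unfold Q; nra).
  assert (HlQ : lambda * M <= Q) by (unfold Q; nra).
  assert (HlQ6 : 6 * (lambda * M) + beta <= Q) by (unfold Q; nra).
  exists (20 * Q), l. split. lra.
  intros t Ht Hnl i Hi Hneg.
  destruct (Hbder t ltac:(lra)) as [Hdb Hdd].
  destruct (Hder t ltac:(lra) (Hl t Ht Hnl)) as [Hdxb [Hdxd Hdy]].
  assert (H0 := abs_bd _ _ (HM 0%nat t ltac:(lia) ltac:(lra))).
  assert (H1 := abs_bd _ _ (HM 1%nat t ltac:(lia) ltac:(lra))).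
  assert (H2 := abs_bd _ _ (HM 2%nat t ltac:(lia) ltac:(lra))).
  assert (H3 := abs_bd _ _ (HM 3%nat t ltac:(lia) ltac:(lra))).
  assert (H4 := abs_bd _ _ (HM 4%nat t ltac:(lia) ltac:(lra))).
  assert (H5 := abs_bd _ _ (HM 5%nat t ltac:(lia) ltac:(lra))).
  assert (HA0 := HM 0%nat t ltac:(lia) ltac:(lra)).
  assert (HA1 := HM 1%nat t ltac:(lia) ltac:(lra)).
  assert (HA2 := HM 2%nat t ltac:(lia) ltac:(lra)).
  assert (HA3 := HM 3%nat t ltac:(lia) ltac:(lra)).
  assert (HA4 := HM 4%nat t ltac:(lia) ltac:(lra)).
  assert (HA5 := HM 5%nat t ltac:(lia) ltac:(lra)).
  assert (Hs := Hs01 t ltac:(lra)).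
  simpl in H0, H1, H2, H3, H4, H5, HA0, HA1, HA2, HA3, HA4, HA5.
  simpl negs.
  set (B := b t) in *. set (D := d t) in *. set (XB := xb t) in *. set (XD := xd t) in *.
  set (Y := y t) in *. set (S := sigma t) in *.
  assert (N0 := negpart_ge0 XB). assert (N1 := negpart_ge0 XD). assert (N2 := negpart_ge0 Y).
  assert (N3 := negpart_ge0 (B - XB)). assert (N4 := negpart_ge0 (D - XD)).
  assert (N5 := negpart_ge0 (1 - B - D - Y)).
  assert (Q0 : 0 <= Q * negpart XB) by nra. assert (Q1 : 0 <= Q * negpart XD) by nra.
  assert (Q2 : 0 <= Q * negpart Y) by nra. assert (Q3 : 0 <= Q * negpart (B - XB)) by nra.
  assert (Q4 : 0 <= Q * negpart (D - XD)) by nra. assert (Q5 : 0 <= Q * negpart (1 - B - D - Y)) by nra.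
  destruct i as [|[|[|[|[|[|i]]]]]]; simpl in Hneg; try lia.
  -
    eexists; split. exact Hdxb. fold B XB XD Y.
    replace (beta * XD + lambda * (B - XB) * (XB + XD + Y)) with
      (beta * XD + lambda * ((B - XB) * XB) + lambda * ((B - XB) * XD) + lambda * ((B - XB) * Y)) by ring.
    pose proof (crossQ beta XD Q ltac:(lra)).
    pose proof (prodQ lambda (B - XB) XB M Q ltac:(lra) HlQ HA3 HA0).
    pose proof (prodQ lambda (B - XB) XD M Q ltac:(lra) HlQ HA3 HA1).
    pose proof (prodQ lambda (B - XB) Y M Q ltac:(lra) HlQ HA3 HA2).
    lra.
  -
    eexists; split. exact Hdxd. fold B D XB XD Y.
    replace (Gamma * lambda * (D - XD) * Y + Gamma * lambda * XD * (1 - B - D) +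
        lambda * (D - XD) * (XB + XD + Y) - beta * XD) with
      ((Gamma * lambda) * ((D - XD) * Y) + (Gamma * lambda) * (XD * (1 - B - D - Y))
       + (Gamma * lambda) * (XD * Y) + lambda * ((D - XD) * XB) + lambda * ((D - XD) * XD)
       + lambda * ((D - XD) * Y) + (- beta) * XD) by ring.
    assert (HGl : Gamma * lambda * M <= Q) by nra.
    pose proof (prodQ (Gamma * lambda) (D - XD) Y M Q ltac:(nra) HGl HA4 HA2).
    pose proof (prodQ (Gamma * lambda) XD (1 - B - D - Y) M Q ltac:(nra) HGl HA1 HA5).
    pose proof (prodQ (Gamma * lambda) XD Y M Q ltac:(nra) HGl HA1 HA2).
    pose proof (prodQ lambda (D - XD) XB M Q ltac:(lra) HlQ HA4 HA0).
    pose proof (prodQ lambda (D - XD) XD M Q ltac:(lra) HlQ HA4 HA1).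
    pose proof (prodQ lambda (D - XD) Y M Q ltac:(lra) HlQ HA4 HA2).
    pose proof (ownQ (- beta) XD Q Hneg ltac:(lra)).
    lra.
  -
    eexists; split. exact Hdy. fold B D XB XD Y S.
    replace (- Gamma * lambda * D * Y + lambda * S * (1 - B - D - Y) * (XB + Y + (1 - Gamma) * XD)) with
      ((- Gamma * lambda * D) * Y + (lambda * S) * ((1 - B - D - Y) * XB)
       + (lambda * S) * ((1 - B - D - Y) * Y) + (lambda * S * (1 - Gamma)) * ((1 - B - D - Y) * XD)) by ring.
    assert (HlS0 : 0 <= lambda * S) by nra.
    assert (HlS1 : 0 <= lambda * S * (1 - Gamma)) by (apply Rmult_le_pos; lra).
    assert (HlS : lambda * S * M <= Q) by nra.
    assert (HlS' : lambda * S * (1 - Gamma) * M <= Q) by nra.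
    pose proof (prodQ (lambda * S) (1 - B - D - Y) XB M Q HlS0 HlS HA5 HA0).
    pose proof (prodQ (lambda * S) (1 - B - D - Y) Y M Q HlS0 HlS HA5 HA2).
    pose proof (prodQ (lambda * S * (1 - Gamma)) (1 - B - D - Y) XD M Q HlS1 HlS' HA5 HA1).
    assert (HDb : - (2 * M) <= D <= 2 * M) by lra.
    assert (HGl : 0 <= Gamma * lambda <= lambda) by (split; nra).
    pose proof (bnd_mul _ _ _ _ HGl HDb).
    pose proof (ownQ (- Gamma * lambda * D) Y Q Hneg ltac:(split; lra)).
    lra.
  -
    exists (beta * D - (beta * XD + lambda * (B - XB) * (XB + XD + Y))). split.
    apply dmin; auto.
    replace (beta * D - (beta * XD + lambda * (B - XB) * (XB + XD + Y))) with
      (beta * (D - XD) + (- (lambda * (XB + XD + Y))) * (B - XB)) by ring.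
    pose proof (crossQ beta (D - XD) Q ltac:(lra)).
    pose proof (bnd_mul lambda lambda (XB + XD + Y) (3 * M) ltac:(lra) ltac:(lra)).
    pose proof (ownQ (- (lambda * (XB + XD + Y))) (B - XB) Q Hneg ltac:(split; lra)).
    lra.
  -
    exists (- beta * D + lambda * Gamma * D * (1 - B - D) - (Gamma * lambda * (D - XD) * Y + Gamma * lambda * XD * (1 - B - D) +
        lambda * (D - XD) * (XB + XD + Y) - beta * XD)). split.
    apply dmin; auto.
    replace (- beta * D + lambda * Gamma * D * (1 - B - D) - (Gamma * lambda * (D - XD) * Y + Gamma * lambda * XD * (1 - B - D) +
        lambda * (D - XD) * (XB + XD + Y) - beta * XD)) with
      ((- beta + Gamma * lambda * (1 - B - D) - Gamma * lambda * Y - lambda * (XB + XD + Y)) * (D - XD)) by ring.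
    assert (HGl : 0 <= Gamma * lambda <= lambda) by (split; nra).
    pose proof (bnd_mul lambda lambda (XB + XD + Y) (3 * M) ltac:(lra) ltac:(lra)).
    pose proof (bnd_mul (Gamma * lambda) lambda (1 - B - D) (2 * M) HGl ltac:(lra)).
    pose proof (bnd_mul (Gamma * lambda) lambda Y M HGl ltac:(lra)).
    pose proof (ownQ (- beta + Gamma * lambda * (1 - B - D) - Gamma * lambda * Y - lambda * (XB + XD + Y)) (D - XD) Q Hneg
       ltac:(split; lra)).
    lra.
  -
    exists (0 - beta * D - (- beta * D + lambda * Gamma * D * (1 - B - D)) -
      (- Gamma * lambda * D * Y + lambda * S * (1 - B - D - Y) * (XB + Y + (1 - Gamma) * XD))). split.
    apply dmin; [apply dmin; [apply dmin; [apply dconst|]|]|]; auto.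
    replace (0 - beta * D - (- beta * D + lambda * Gamma * D * (1 - B - D)) -
      (- Gamma * lambda * D * Y + lambda * S * (1 - B - D - Y) * (XB + Y + (1 - Gamma) * XD))) with
      ((- (lambda * Gamma * D) - lambda * S * (XB + Y + (1 - Gamma) * XD)) * (1 - B - D - Y)) by ring.
    assert (HGl : 0 <= lambda * Gamma <= lambda) by (split; nra).
    assert (HlS : 0 <= lambda * S <= lambda) by (split; nra).
    pose proof (bnd_mul (1 - Gamma) 1 XD M ltac:(lra) ltac:(lra)).
    pose proof (bnd_mul (lambda * S) lambda (XB + Y + (1 - Gamma) * XD) (3 * M) HlS ltac:(lra)).
    pose proof (bnd_mul (lambda * Gamma) lambda D (2 * M) HGl ltac:(lra)).
    pose proof (ownQ (- (lambda * Gamma * D) - lambda * S * (XB + Y + (1 - Gamma) * XD)) (1 - B - D - Y) Q Hneg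
       ltac:(split; lra)).
    lra.
Qed.

End Inv.


Section Cmp.
Variables (lambda beta Gamma d0 xd0 : R) (b d s1 s2 xb1 xd1 y1 xb2 xd2 y2 : R -> R).
Hypotheses (Hlam : 0 < lambda) (Hbeta : 0 < beta) (HG : 0 < Gamma <= 1)
  (Hx0 : 0 < xd0 <= d0) (Hd0 : d0 < 1) (Hbd : SolBD lambda beta Gamma d0 b d)
  (Hs1 : forall t, 0 <= t -> 0 <= s1 t <= 1)
  (Hsl1 : forall K, exists l : list R, forall t, 0 < t <= K -> ~ In t l -> continuity_pt s1 t)
  (Hsol1 : SolX lambda beta Gamma xd0 b d s1 xb1 xd1 y1)
  (Hs2 : forall t, 0 <= t -> 0 <= s2 t <= 1)
  (Hsl2 : forall K, exists l : list R, forall t, 0 < t <= K -> ~ In t l -> continuity_pt s2 t)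
  (Hsol2 : SolX lambda beta Gamma xd0 b d s2 xb2 xd2 y2)
  (Hle : forall t, 0 < t -> continuity_pt s1 t -> continuity_pt s2 t -> s1 t <= s2 t).

Definition gc (j : nat) : R -> R := match j with
  | O => fun t => xb2 t - xb1 t | 1 => fun t => xd2 t - xd1 t | _ => fun t => y2 t - y1 t end.

Lemma cmp_all : forall i t, (i < 3)%nat -> 0 <= t -> 0 <= gc i t.
Proof.
  assert (I1 := inv_all lambda beta Gamma d0 xd0 b d s1 xb1 xd1 y1 Hlam Hbeta HG Hx0 Hd0 Hbd Hs1 Hsl1 Hsol1).
  assert (I2 := inv_all lambda beta Gamma d0 xd0 b d s2 xb2 xd2 y2 Hlam Hbeta HG Hx0 Hd0 Hbd Hs2 Hsl2 Hsol2).
  assert (Hc1 : forall i, (i < 6)%nat -> contR 0 (gin b d xb1 xd1 y1 i)).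
  { destruct Hbd as [Hb0 [Hdd0 [Hcb [Hcd Hbder]]]].
    destruct Hsol1 as [Hxb0 [Hxd0 [Hy0 [Hcxb [Hcxd [Hcy Hder]]]]]].
    intros [|[|[|[|[|[|i]]]]]] Hi; simpl; try lia; auto; repeat apply cminus; auto; apply cconst. }
  assert (Hc2 : forall i, (i < 6)%nat -> contR 0 (gin b d xb2 xd2 y2 i)).
  { destruct Hbd as [Hb0 [Hdd0 [Hcb [Hcd Hbder]]]].
    destruct Hsol2 as [Hxb0 [Hxd0 [Hy0 [Hcxb [Hcxd [Hcy Hder]]]]]].
    intros [|[|[|[|[|[|i]]]]]] Hi; simpl; try lia; auto; repeat apply cminus; auto; apply cconst. }
  destruct Hbd as [Hb0 [Hdd0 [Hcb [Hcd Hbder]]]].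
  destruct Hsol1 as [Hxb0 [Hxd0 [Hy0 [Hcxb [Hcxd [Hcy Hder]]]]]].
  destruct Hsol2 as [Hxb0' [Hxd0' [Hy0' [Hcxb' [Hcxd' [Hcy' Hder']]]]]].
  assert (Hc : forall i, (i < 3)%nat -> contR 0 (gc i)).
  { intros [|[|[|i]]] Hi; simpl; try lia; apply cminus; auto. }
  assert (Hi0 : forall i, (i < 3)%nat -> 0 <= gc i 0).
  { intros [|[|[|i]]] Hi; simpl; try lia; rewrite ?Hxb0, ?Hxd0, ?Hy0, ?Hxb0', ?Hxd0', ?Hy0'; lra. }
  apply PL; auto.
  intros K. destruct (unif_bound' 0 _ 6 K Hc1) as [M1 [HM10 HM1]].
  destruct (unif_bound' 0 _ 6 K Hc2) as [M2 [HM20 HM2]].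
  destruct (Hsl1 K) as [l1 Hl1]. destruct (Hsl2 K) as [l2 Hl2].
  set (M := M1 + M2).
  set (Q := (beta + lambda) * (10 * M + 1)).
  assert (HM0 : 0 <= M) by (unfold M; lra).
  assert (HQ : 0 <= Q) by (unfold Q; apply Rmult_le_pos; lra).
  assert (HlQ : 10 * (lambda * M) + beta <= Q) by (unfold Q; nra).
  exists (20 * Q), (l1 ++ l2). split. lra.
  intros t Ht Hnl i Hi Hneg.
  assert (Hn1 : ~ In t l1) by (intro; apply Hnl; apply in_or_app; auto).
  assert (Hn2 : ~ In t l2) by (intro; apply Hnl; apply in_or_app; auto).
  assert (Hct1 := Hl1 t Ht Hn1). assert (Hct2 := Hl2 t Ht Hn2).
  assert (Hs12 := Hle t ltac:(lra) Hct1 Hct2).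
  destruct (Hbder t ltac:(lra)) as [Hdb Hdd].
  destruct (Hder t ltac:(lra) Hct1) as [Hdxb1 [Hdxd1 Hdy1]].
  destruct (Hder' t ltac:(lra) Hct2) as [Hdxb2 [Hdxd2 Hdy2]].
  assert (A := fun j Hj => abs_bd _ _ (HM1 j t Hj ltac:(lra))).
  assert (A' := fun j Hj => abs_bd _ _ (HM2 j t Hj ltac:(lra))).
  assert (P2 := fun j Hj => I2 j t Hj ltac:(lra)).
  assert (A0 := A 0%nat ltac:(lia)). assert (A1 := A 1%nat ltac:(lia)). assert (A2 := A 2%nat ltac:(lia)).
  assert (A3 := A 3%nat ltac:(lia)). assert (A4 := A 4%nat ltac:(lia)). assert (A5 := A 5%nat ltac:(lia)).
  assert (B0 := A' 0%nat ltac:(lia)). assert (B1 := A' 1%nat ltac:(lia)). assert (B2 := A' 2%nat ltac:(lia)).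
  assert (B3 := A' 3%nat ltac:(lia)). assert (B4 := A' 4%nat ltac:(lia)). assert (B5 := A' 5%nat ltac:(lia)).
  assert (P0 := P2 0%nat ltac:(lia)). assert (P1 := P2 1%nat ltac:(lia)). assert (P2' := P2 2%nat ltac:(lia)).
  assert (P3 := P2 3%nat ltac:(lia)). assert (P4 := P2 4%nat ltac:(lia)). assert (P5 := P2 5%nat ltac:(lia)).
  clear A A' P2.
  assert (S1b := Hs1 t ltac:(lra)). assert (S2b := Hs2 t ltac:(lra)).
  simpl in *. simpl negs.
  set (B := b t) in *. set (D := d t) in *. set (XB1 := xb1 t) in *. set (XD1 := xd1 t) in *.
  set (Y1 := y1 t) in *. set (S1 := s1 t) in *.
  set (XB2 := xb2 t) in *. set (XD2 := xd2 t) in *.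
  set (Y2 := y2 t) in *. set (S2 := s2 t) in *.
  assert (N0 := negpart_ge0 (XB2 - XB1)). assert (N1 := negpart_ge0 (XD2 - XD1)).
  assert (N2 := negpart_ge0 (Y2 - Y1)).
  assert (Q0 : 0 <= Q * negpart (XB2 - XB1)) by (apply Rmult_le_pos; auto).
  assert (Q1 : 0 <= Q * negpart (XD2 - XD1)) by (apply Rmult_le_pos; auto).
  assert (Q2 : 0 <= Q * negpart (Y2 - Y1)) by (apply Rmult_le_pos; auto).
  assert (HGl : 0 <= Gamma * lambda <= lambda) by (apply (frac_bd Gamma lambda); lra).
  assert (HlS : 0 <= lambda * S1 <= lambda) by (apply (frac_bd S1 lambda); lra).
  assert (HMM1 : M1 <= M) by (unfold M; lra). assert (HMM2 : M2 <= M) by (unfold M; lra).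
  destruct i as [|[|[|i]]]; simpl in Hneg; try lia.
  - exists (beta * XD2 + lambda * (B - XB2) * (XB2 + XD2 + Y2) - (beta * XD1 + lambda * (B - XB1) * (XB1 + XD1 + Y1))).
    split. apply dmin; auto.
    replace (beta * XD2 + lambda * (B - XB2) * (XB2 + XD2 + Y2) - (beta * XD1 + lambda * (B - XB1) * (XB1 + XD1 + Y1)))
      with ((beta + lambda * (B - XB2)) * (XD2 - XD1) + (lambda * (B - XB2)) * (Y2 - Y1)
            + (lambda * (B - XB2) - lambda * (XB1 + XD1 + Y1)) * (XB2 - XB1)) by ring.
    pose proof (bnd_mul lambda lambda (B - XB2) M ltac:(lra) ltac:(lra)).
    pose proof (bnd_mul lambda lambda (XB1 + XD1 + Y1) (3 * M) ltac:(lra) ltac:(lra)).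
    assert (0 <= lambda * (B - XB2)) by (apply Rmult_le_pos; lra).
    pose proof (crossQ (beta + lambda * (B - XB2)) (XD2 - XD1) Q ltac:(split; lra)).
    pose proof (crossQ (lambda * (B - XB2)) (Y2 - Y1) Q ltac:(split; lra)).
    pose proof (ownQ (lambda * (B - XB2) - lambda * (XB1 + XD1 + Y1)) (XB2 - XB1) Q Hneg ltac:(split; lra)).
    lra.
  - exists (Gamma * lambda * (D - XD2) * Y2 + Gamma * lambda * XD2 * (1 - B - D) +
        lambda * (D - XD2) * (XB2 + XD2 + Y2) - beta * XD2 -
        (Gamma * lambda * (D - XD1) * Y1 + Gamma * lambda * XD1 * (1 - B - D) +
        lambda * (D - XD1) * (XB1 + XD1 + Y1) - beta * XD1)).
    split. apply dmin; auto.
    replace (Gamma * lambda * (D - XD2) * Y2 + Gamma * lambda * XD2 * (1 - B - D) +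
        lambda * (D - XD2) * (XB2 + XD2 + Y2) - beta * XD2 -
        (Gamma * lambda * (D - XD1) * Y1 + Gamma * lambda * XD1 * (1 - B - D) +
        lambda * (D - XD1) * (XB1 + XD1 + Y1) - beta * XD1))
      with ((Gamma * lambda * (D - XD2)) * (Y2 - Y1) + (lambda * (D - XD2)) * (XB2 - XB1)
            + (lambda * (D - XD2)) * (Y2 - Y1)
            + (Gamma * lambda * (1 - B - D) - Gamma * lambda * Y1 + lambda * (D - XD2)
               - lambda * (XB1 + XD1 + Y1) - beta) * (XD2 - XD1)) by ring.
    pose proof (bnd_mul lambda lambda (D - XD2) M ltac:(lra) ltac:(lra)).
    pose proof (bnd_mul (Gamma * lambda) lambda (D - XD2) M HGl ltac:(lra)).
    pose proof (bnd_mul lambda lambda (XB1 + XD1 + Y1) (3 * M) ltac:(lra) ltac:(lra)).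
    pose proof (bnd_mul (Gamma * lambda) lambda (1 - B - D) (2 * M) HGl ltac:(lra)).
    pose proof (bnd_mul (Gamma * lambda) lambda Y1 M HGl ltac:(lra)).
    assert (0 <= Gamma * lambda * (D - XD2)) by (apply Rmult_le_pos; lra).
    assert (0 <= lambda * (D - XD2)) by (apply Rmult_le_pos; lra).
    pose proof (crossQ (Gamma * lambda * (D - XD2)) (Y2 - Y1) Q ltac:(split; lra)).
    pose proof (crossQ (lambda * (D - XD2)) (XB2 - XB1) Q ltac:(split; lra)).
    pose proof (crossQ (lambda * (D - XD2)) (Y2 - Y1) Q ltac:(split; lra)).
    pose proof (ownQ (Gamma * lambda * (1 - B - D) - Gamma * lambda * Y1 + lambda * (D - XD2)
               - lambda * (XB1 + XD1 + Y1) - beta) (XD2 - XD1) Q Hneg ltac:(split; lra)).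
    lra.
  - exists (- Gamma * lambda * D * Y2 + lambda * S2 * (1 - B - D - Y2) * (XB2 + Y2 + (1 - Gamma) * XD2) -
        (- Gamma * lambda * D * Y1 + lambda * S1 * (1 - B - D - Y1) * (XB1 + Y1 + (1 - Gamma) * XD1))).
    split. apply dmin; auto.
    replace (- Gamma * lambda * D * Y2 + lambda * S2 * (1 - B - D - Y2) * (XB2 + Y2 + (1 - Gamma) * XD2) -
        (- Gamma * lambda * D * Y1 + lambda * S1 * (1 - B - D - Y1) * (XB1 + Y1 + (1 - Gamma) * XD1)))
      with (lambda * (S2 - S1) * ((1 - B - D - Y2) * (XB2 + Y2 + (1 - Gamma) * XD2))
            + (lambda * S1 * (1 - B - D - Y2)) * (XB2 - XB1)
            + (lambda * S1 * (1 - B - D - Y2) * (1 - Gamma)) * (XD2 - XD1)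
            + (- Gamma * lambda * D + lambda * S1 * (1 - B - D - Y2)
               - lambda * S1 * (XB1 + Y1 + (1 - Gamma) * XD1)) * (Y2 - Y1)) by ring.
    assert (0 <= (1 - Gamma) * XD2) by (apply Rmult_le_pos; lra).
    assert (HW2 : 0 <= XB2 + Y2 + (1 - Gamma) * XD2) by lra.
    assert (T1 : 0 <= lambda * (S2 - S1) * ((1 - B - D - Y2) * (XB2 + Y2 + (1 - Gamma) * XD2))).
    { apply Rmult_le_pos. apply Rmult_le_pos; lra. apply Rmult_le_pos; lra. }
    pose proof (bnd_mul (lambda * S1) lambda (1 - B - D - Y2) M HlS ltac:(lra)).
    assert (0 <= lambda * S1 * (1 - B - D - Y2)) by (apply Rmult_le_pos; lra).
    assert (0 <= lambda * S1 * (1 - B - D - Y2) * (1 - Gamma)) by (apply Rmult_le_pos; lra).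
    assert (lambda * S1 * (1 - B - D - Y2) * (1 - Gamma) <= lambda * S1 * (1 - B - D - Y2)) by (apply mul_le_self; lra).
    pose proof (bnd_mul (1 - Gamma) 1 XD1 M ltac:(lra) ltac:(lra)).
    pose proof (bnd_mul (lambda * S1) lambda (XB1 + Y1 + (1 - Gamma) * XD1) (3 * M) HlS ltac:(lra)).
    pose proof (bnd_mul (Gamma * lambda) lambda D (2 * M) HGl ltac:(lra)).
    pose proof (crossQ (lambda * S1 * (1 - B - D - Y2)) (XB2 - XB1) Q ltac:(split; lra)).
    pose proof (crossQ (lambda * S1 * (1 - B - D - Y2) * (1 - Gamma)) (XD2 - XD1) Q ltac:(split; lra)).
    pose proof (ownQ (- Gamma * lambda * D + lambda * S1 * (1 - B - D - Y2)
               - lambda * S1 * (XB1 + Y1 + (1 - Gamma) * XD1)) (Y2 - Y1) Q Hneg ltac:(split; lra)).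
    lra.
Qed.

End Cmp.


Lemma thr_range tau t : 0 <= threshold tau t <= 1.
Proof. destruct tau; simpl; try lra. destruct (Rlt_dec t r); lra. Qed.

Lemma thr_not_cont r : ~ continuity_pt (threshold (Some r)) r.
Proof.
  intro H. destruct (H (1/2) ltac:(lra)) as [alp [Ha Hal]].
  specialize (Hal (r - alp/2)). simpl in Hal. unfold R_dist in Hal.
  unfold threshold in Hal. destruct (Rlt_dec (r - alp/2) r); [|lra]. destruct (Rlt_dec r r); [lra|].
  assert (Habs : Rabs (r - alp / 2 - r) < alp) by (rewrite Rabs_left by lra; lra).
  assert (HD : D_x no_cond r (r - alp / 2)). { split. exact I. lra. }
  specialize (Hal (conj HD Habs)). rewrite Rabs_right in Hal; lra.
Qed.

Lemma target_some x A T : IsTargetTime x A T -> exists t, 0 <= t /\ A <= x t.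
Proof.
  intros [H1 H2]. apply NNPP. intro Hn. assert (T + 1 <= T). apply H2. intros t Ht HA.
  exfalso; apply Hn; exists t; auto. lra.
Qed.

Lemma target_ge0 x A T : IsTargetTime x A T -> 0 <= T.
Proof. intros [H1 H2]. apply H2. intros; auto. Qed.

Lemma target_reached x A T : contR 0 x -> IsTargetTime x A T -> A <= x T.
Proof.
  intros Hc HT. pose proof (target_ge0 _ _ _ HT) as HT0. destruct HT as [H1 H2].
  apply Rnot_lt_le. intro Hlt.
  destruct (neg_near 0 (fun t => x t - A) T) as [dl [Hdl Hdl2]].
  apply cminus; auto. apply cconst. auto. lra.
  assert (T + dl/2 <= T). apply H2. intros t Ht HA.
  assert (T <= t) by (apply H1; auto). apply Rnot_lt_le. intro. specialize (Hdl2 t Ht ltac:(lra)). lra.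
  lra.
Qed.

Lemma target_construct (x x' : R -> R) A T : IsTargetTime x A T ->
  (forall t, 0 <= t -> x t <= x' t) ->
  exists T', IsTargetTime x' A T' /\ T' <= T.
Proof.
  intros HT Hle. destruct (target_some _ _ _ HT) as [t0 [Ht0 HA0]].
  set (E := fun T'' => forall t, 0 <= t -> A <= x' t -> T'' <= t).
  destruct (completeness E) as [T' [Hub Hlub]].
  { exists t0. intros T'' HE. apply HE; auto. specialize (Hle t0 Ht0). lra. }
  { exists 0. intros t Ht _; auto. }
  assert (HT' : IsTargetTime x' A T').
  { split. intros t Ht HA. apply Hlub. intros T'' HE. apply HE; auto. intros T'' HE. apply Hub; auto. }
  exists T'. split; auto. destruct HT as [H1 H2]. apply H2. intros t Ht HA.
  destruct HT' as [H1' _]. apply H1'; auto. specialize (Hle t Ht). lra.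
Qed.

Lemma target_transfer (x x'' : R -> R) A T tau : contR 0 x -> IsTargetTime x A T -> T < tau ->
  (forall t, 0 <= t <= tau -> x'' t = x t) -> IsTargetTime x'' A T.
Proof.
  intros Hc HT Htau Heq. pose proof (target_reached _ _ _ Hc HT). pose proof (target_ge0 _ _ _ HT).
  destruct HT as [H1 H2]. split.
  - intros t Ht HA. destruct (Rle_dec t tau). apply H1; auto. rewrite <- Heq; auto; lra. lra.
  - intros T'' HE. apply HE. auto. rewrite Heq; auto; lra.
Qed.


Lemma cp_plus f g x : continuity_pt f x -> continuity_pt g x -> continuity_pt (fun t => f t + g t) x.
Proof. intros; exact (continuity_pt_plus f g x H H0). Qed.
Lemma cp_minus f g x : continuity_pt f x -> continuity_pt g x -> continuity_pt (fun t => f t - g t) x.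
Proof. intros; exact (continuity_pt_minus f g x H H0). Qed.
Lemma cp_mult f g x : continuity_pt f x -> continuity_pt g x -> continuity_pt (fun t => f t * g t) x.
Proof. intros; exact (continuity_pt_mult f g x H H0). Qed.
Lemma cp_const c x : continuity_pt (fun _ => c) x.
Proof. apply continuity_pt_const. intros a b; auto. Qed.
Lemma cp_abs f x : continuity_pt f x -> continuity_pt (fun t => Rabs (f t)) x.
Proof. intros. exact (continuity_pt_comp f Rabs x H (Rcontinuity_abs _)). Qed.
Lemma cp_exp f x : continuity_pt f x -> continuity_pt (fun t => exp (f t)) x.
Proof. intros. exact (continuity_pt_comp f exp x H (derivable_continuous_pt _ _ (derivable_pt_exp _))). Qed.

Definition clamp (a u : R) : R :=
  let m := (a + u - Rabs (a - u)) / 2 in (m + Rabs m) / 2.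

Lemma clamp_cont f g x : continuity_pt f x -> continuity_pt g x ->
  continuity_pt (fun t => clamp (f t) (g t)) x.
Proof.
  intros. unfold clamp.
  apply cp_mult; [|apply cp_const].
  apply cp_plus; [|apply cp_abs]; (apply cp_mult; [|apply cp_const]);
  (apply cp_minus; [apply cp_plus; auto|apply cp_abs; apply cp_minus; auto]).
Qed.

Lemma clamp_spec a u : 0 <= a ->
  (u <= 0 -> clamp a u = 0) /\ (a <= u -> clamp a u = a) /\ (0 <= u <= a -> clamp a u = u)
  /\ 0 <= clamp a u <= a.
Proof.
  intros Ha. unfold clamp.
  destruct (Rle_dec a u).
  - rewrite (Rabs_left1 (a - u)) by lra. replace ((a + u - - (a - u)) / 2) with a by field.
    rewrite Rabs_right by lra. repeat split; intros; lra.
  - rewrite (Rabs_right (a - u)) by lra. replace ((a + u - (a - u)) / 2) with u by field.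
    destruct (Rle_dec 0 u). rewrite Rabs_right by lra. repeat split; intros; lra.
    rewrite Rabs_left by lra. repeat split; intros; lra.
Qed.

Lemma clamp_lip a u u' : 0 <= a -> Rabs (clamp a u - clamp a u') <= Rabs (u - u').
Proof.
  intros Ha. destruct (clamp_spec a u Ha) as [A1 [A2 [A3 A4]]].
  destruct (clamp_spec a u' Ha) as [B1 [B2 [B3 B4]]].
  destruct (Rle_dec u 0); destruct (Rle_dec u' 0); destruct (Rle_dec a u); destruct (Rle_dec a u');
  repeat match goal with
  | H : ?P -> clamp a ?v = _, H' : ?P |- _ => rewrite (H H') in *; clear H
  end;
  try (rewrite A3 by lra); try (rewrite B3 by lra); try (rewrite A1 by lra); try (rewrite B1 by lra);
  try (rewrite A2 by lra); try (rewrite B2 by lra);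
  unfold Rabs; repeat destruct Rcase_abs; lra.
Qed.

Lemma vanish x y c : 0 <= c -> (forall n, x <= y + c * (1/2)^n) -> x <= y.
Proof.
  intros Hc H. apply Rnot_lt_le. intro Hlt.
  destruct (pow_lt_1_zero (1/2) ltac:(rewrite Rabs_right; lra) ((x - y) / (c + 1)))
    as [N HN]. apply Rdiv_lt_0_compat; lra.
  specialize (HN N (le_n N)). specialize (H N).
  assert (0 <= (1/2)^N) by (apply pow_le; lra).
  rewrite Rabs_right in HN by lra.
  assert (c * (1/2)^N <= c * ((x - y) / (c + 1))) by (apply Rmult_le_compat_l; lra).
  assert (c * ((x - y) / (c + 1)) < x - y).
  { apply Rmult_lt_reg_r with (c + 1). lra. field_simplify; nra. }
  lra.
Qed.

Lemma abs_lin a1 a2 x1 x2 K : Rabs a1 <= K -> Rabs a2 <= K ->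
  Rabs (a1 * x1 + a2 * x2) <= K * (Rabs x1 + Rabs x2).
Proof.
  intros. eapply Rle_trans. apply Rabs_triang. rewrite !Rabs_mult.
  pose proof (Rabs_pos x1). pose proof (Rabs_pos x2). pose proof (Rabs_pos a1). nra.
Qed.

Lemma abs_le_of x K : - K <= x <= K -> Rabs x <= K.
Proof. intros. unfold Rabs; destruct Rcase_abs; lra. Qed.

Lemma exp_le x y : x <= y -> exp x <= exp y.
Proof. intros [H|H]. left; apply exp_increasing; auto. subst; lra. Qed.

Lemma cont_of_pt (f : R -> R) s : continuity_pt f s -> continuous f s.
Proof. intros H. apply continuity_pt_filterlim; auto. Qed.

Definition RI (f : R -> R) (a b : R) : R := RInt f a b.

Lemma RI_point f a : RI f a a = 0.
Proof. unfold RI. rewrite RInt_point. reflexivity. Qed.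

Lemma RInt_lip (f : R -> R) K tau a c : 0 < tau -> (forall s, 0 < s -> continuous f s) ->
  (forall s, 0 <= s -> Rabs (f s) <= K) -> tau <= a -> tau <= c ->
  Rabs (RI f tau a - RI f tau c) <= K * Rabs (a - c).
Proof.
  intros Ht Hc Hb Ha Hcc.
  assert (Hex : forall x y, tau <= x -> tau <= y -> ex_RInt f x y).
  { intros x y Hx Hy. apply (@ex_RInt_continuous R_CompleteNormedModule). intros z Hz. apply Hc.
    assert (Rmin x y >= tau) by (unfold Rmin; destruct Rle_dec; lra). lra. }
  assert (E : RI f tau c + RI f c a = RI f tau a).
  { apply (RInt_Chasles f tau c a); apply Hex; lra. }
  rewrite <- E. replace (RI f tau c + RI f c a - RI f tau c) with (RI f c a) by ring. unfold RI.
  destruct (Rle_dec c a).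
  - rewrite (Rabs_right (a - c)) by lra. rewrite Rmult_comm. apply abs_RInt_le_const; [exact r|apply Hex; lra|intros; apply Hb; lra].
  - rewrite <- opp_RInt_swap by (apply Hex; lra).
    change (Rabs (- RInt f a c) <= K * Rabs (a - c)). rewrite Rabs_Ropp.
    rewrite (Rabs_left (a - c)) by lra. replace (- (a - c)) with (c - a) by ring.
    rewrite Rmult_comm. apply abs_RInt_le_const; [lra|apply Hex; lra|intros; apply Hb; lra].
Qed.

Lemma lip_contR tau f K : 0 <= K -> (forall t t', tau <= t -> tau <= t' -> Rabs (f t - f t') <= K * Rabs (t - t')) ->
  contR tau f.
Proof.
  intros HK H t Ht eps Heps. exists (eps / (K + 1)). split. apply Rdiv_lt_0_compat; lra.
  intros x [Hx1 Hx2]. simpl in *. unfold R_dist in *.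
  eapply Rle_lt_trans. apply H; auto.
  assert (K * Rabs (x - t) <= K * (eps / (K + 1))) by (apply Rmult_le_compat_l; lra).
  assert (K * (eps / (K + 1)) < eps). { apply Rmult_lt_reg_r with (K + 1). lra. field_simplify; nra. }
  lra.
Qed.

Section Picard.
Variables (lambda beta Gamma tau u0 v0 w0 : R) (b d : R -> R).
Hypotheses (Hlam : 0 < lambda) (Hbeta : 0 < beta) (HG : 0 < Gamma <= 1) (Htau : 0 < tau)
  (Hw0 : 0 <= w0)
  (Hb01 : forall s, 0 <= s -> 0 <= b s /\ 0 <= d s /\ 0 <= 1 - b s - d s)
  (Hcb : contR 0 b) (Hcd : contR 0 d).

Definition yE s := w0 * exp (- (Gamma * lambda / beta) * (b s - b tau)).
Definition c1 s u := clamp (b s) u.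
Definition c2 s v := clamp (d s) v.
Definition G1 s u v := beta * c2 s v + lambda * (b s - c1 s u) * (c1 s u + c2 s v + yE s).
Definition G2 s u v := Gamma * lambda * (d s - c2 s v) * yE s + Gamma * lambda * c2 s v * (1 - b s - d s)
  + lambda * (d s - c2 s v) * (c1 s u + c2 s v + yE s) - beta * c2 s v.
Definition Y0 := w0 * exp (Gamma * lambda / beta).
Definition KK := (beta + lambda) * (6 + 3 * Y0).

Lemma yE_bd s : 0 <= s -> 0 <= yE s <= Y0.
Proof.
  intros Hs. destruct (Hb01 s Hs) as [B1 [B2 B3]]. destruct (Hb01 tau ltac:(lra)) as [C1 [C2 C3]].
  unfold yE, Y0. split. apply Rmult_le_pos; auto. left; apply exp_pos.
  apply Rmult_le_compat_l; auto. apply exp_le.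
  assert (0 < Gamma * lambda / beta) by (apply Rdiv_lt_0_compat; nra). nra.
Qed.

Lemma Y0_nonneg : 0 <= Y0.
Proof. unfold Y0. apply Rmult_le_pos; auto. left; apply exp_pos. Qed.

Lemma c_bd s u v : 0 <= s -> 0 <= c1 s u <= b s /\ 0 <= c2 s v <= d s.
Proof.
  intros Hs. destruct (Hb01 s Hs) as [B1 [B2 B3]]. unfold c1, c2.
  split; apply clamp_spec; auto.
Qed.

Lemma G_bd s u v : 0 <= s -> Rabs (G1 s u v) <= KK /\ Rabs (G2 s u v) <= KK.
Proof.
  intros Hs. destruct (Hb01 s Hs) as [B1 [B2 B3]]. destruct (c_bd s u v Hs) as [[C1 C1'] [C2 C2']].
  destruct (yE_bd s Hs) as [Y1 Y2]. pose proof Y0_nonneg.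
  set (a1 := c1 s u) in *. set (a2 := c2 s v) in *. set (yy := yE s) in *.
  assert (HGl : 0 <= Gamma * lambda <= lambda) by (apply (frac_bd Gamma lambda); lra).
  unfold G1, G2, KK; fold a1 a2 yy. split; apply abs_le_of.
  - assert (0 <= lambda * (b s - a1)) by (apply Rmult_le_pos; lra).
    assert (lambda * (b s - a1) <= lambda) by (apply (mul_le_self lambda); lra || nra).
    assert (0 <= lambda * (b s - a1) * (a1 + a2 + yy)) by (apply Rmult_le_pos; lra).
    assert (lambda * (b s - a1) * (a1 + a2 + yy) <= lambda * (2 + Y0)) by nra.
    split; nra.
  - assert (0 <= Gamma * lambda * (d s - a2)) by (apply Rmult_le_pos; lra).
    assert (Gamma * lambda * (d s - a2) <= lambda) by nra.
    assert (0 <= Gamma * lambda * (d s - a2) * yy) by (apply Rmult_le_pos; lra).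
    assert (Gamma * lambda * (d s - a2) * yy <= lambda * Y0) by nra.
    assert (0 <= Gamma * lambda * a2) by (apply Rmult_le_pos; lra).
    assert (Gamma * lambda * a2 <= lambda) by nra.
    assert (0 <= Gamma * lambda * a2 * (1 - b s - d s)) by (apply Rmult_le_pos; lra).
    assert (Gamma * lambda * a2 * (1 - b s - d s) <= lambda) by nra.
    assert (0 <= lambda * (d s - a2)) by (apply Rmult_le_pos; lra).
    assert (lambda * (d s - a2) <= lambda) by nra.
    assert (0 <= lambda * (d s - a2) * (a1 + a2 + yy)) by (apply Rmult_le_pos; lra).
    assert (lambda * (d s - a2) * (a1 + a2 + yy) <= lambda * (2 + Y0)) by nra.
    assert (beta * a2 <= beta) by nra. assert (0 <= beta * a2) by nra.
    split; nra.
Qed.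

Lemma G_lip s u v u' v' : 0 <= s ->
  Rabs (G1 s u v - G1 s u' v') <= KK * (Rabs (u - u') + Rabs (v - v')) /\
  Rabs (G2 s u v - G2 s u' v') <= KK * (Rabs (u - u') + Rabs (v - v')).
Proof.
  intros Hs. destruct (Hb01 s Hs) as [B1 [B2 B3]].
  destruct (c_bd s u v Hs) as [[C1 C1'] [C2 C2']]. destruct (c_bd s u' v' Hs) as [[D1 D1'] [D2 D2']].
  destruct (yE_bd s Hs) as [Y1 Y2]. pose proof Y0_nonneg.
  assert (L1 : Rabs (c1 s u - c1 s u') <= Rabs (u - u')) by (apply clamp_lip; lra).
  assert (L2 : Rabs (c2 s v - c2 s v') <= Rabs (v - v')) by (apply clamp_lip; lra).
  set (a1 := c1 s u) in *. set (a2 := c2 s v) in *. set (a1' := c1 s u') in *. set (a2' := c2 s v') in *.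
  set (yy := yE s) in *.
  assert (HGl : 0 <= Gamma * lambda <= lambda) by (apply (frac_bd Gamma lambda); lra).
  assert (Hfin : forall K', 0 <= K' -> K' <= KK -> forall X, Rabs X <= K' * (Rabs (a1 - a1') + Rabs (a2 - a2')) ->
           Rabs X <= KK * (Rabs (u - u') + Rabs (v - v'))).
  { intros K' HK' HKK X HX. eapply Rle_trans. exact HX.
    pose proof (Rabs_pos (a1 - a1')). pose proof (Rabs_pos (a2 - a2')). nra. }
  unfold KK in Hfin. unfold G1, G2; fold a1 a2 a1' a2' yy. split.
  - apply (Hfin (beta + lambda * (3 + Y0))). nra. nra.
    replace (beta * a2 + lambda * (b s - a1) * (a1 + a2 + yy) - (beta * a2' + lambda * (b s - a1') * (a1' + a2' + yy)))
      with ((lambda * (b s - a1) - lambda * (a1' + a2' + yy)) * (a1 - a1') + (beta + lambda * (b s - a1)) * (a2 - a2'))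
      by ring.
    apply abs_lin; apply abs_le_of.
    + assert (0 <= lambda * (b s - a1) <= lambda) by (split; nra).
      assert (0 <= lambda * (a1' + a2' + yy) <= lambda * (2 + Y0)) by (split; nra). nra.
    + assert (0 <= lambda * (b s - a1) <= lambda) by (split; nra). nra.
  - apply (Hfin (beta + lambda * (5 + 2 * Y0))). nra. nra.
    replace (Gamma * lambda * (d s - a2) * yy + Gamma * lambda * a2 * (1 - b s - d s) +
      lambda * (d s - a2) * (a1 + a2 + yy) - beta * a2 -
      (Gamma * lambda * (d s - a2') * yy + Gamma * lambda * a2' * (1 - b s - d s) +
      lambda * (d s - a2') * (a1' + a2' + yy) - beta * a2'))
      with ((lambda * (d s - a2)) * (a1 - a1') +
            (- (Gamma * lambda) * yy + Gamma * lambda * (1 - b s - d s) + lambda * (d s - a2)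
             - lambda * (a1' + a2' + yy) - beta) * (a2 - a2')) by ring.
    apply abs_lin; apply abs_le_of.
    + assert (0 <= lambda * (d s - a2) <= lambda) by (split; nra). nra.
    + assert (0 <= lambda * (d s - a2) <= lambda) by (split; nra).
      assert (0 <= lambda * (a1' + a2' + yy) <= lambda * (2 + Y0)) by (split; nra).
      assert (0 <= Gamma * lambda * yy <= lambda * Y0) by (split; nra).
      assert (0 <= Gamma * lambda * (1 - b s - d s) <= lambda) by (split; nra).
      nra.
Qed.

Lemma G_cont (P Q : R -> R) s : 0 < s -> continuity_pt P s -> continuity_pt Q s ->
  continuity_pt (fun x => G1 x (P x) (Q x)) s /\ continuity_pt (fun x => G2 x (P x) (Q x)) s.
Proof.
  intros Hs HP HQ.
  assert (Hb : continuity_pt b s) by (apply (contR_pt 0); auto).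
  assert (Hd : continuity_pt d s) by (apply (contR_pt 0); auto).
  assert (H1 : continuity_pt (fun x => c1 x (P x)) s) by (apply clamp_cont; auto).
  assert (H2 : continuity_pt (fun x => c2 x (Q x)) s) by (apply clamp_cont; auto).
  assert (Hy : continuity_pt yE s).
  { unfold yE. apply cp_mult. apply cp_const. apply cp_exp. apply cp_mult. apply cp_const.
    apply cp_minus; auto. apply cp_const. }
  unfold G1, G2. split.
  - apply cp_plus. apply cp_mult; auto. apply cp_const.
    apply cp_mult. apply cp_mult. apply cp_const. apply cp_minus; auto.
    apply cp_plus; auto. apply cp_plus; auto.
  - apply cp_minus. apply cp_plus. apply cp_plus.
    apply cp_mult; auto. apply cp_mult; auto. apply cp_const. apply cp_minus; auto.
    apply cp_mult; auto. apply cp_mult; auto. apply cp_const. apply cp_minus; auto. apply cp_minus; auto. apply cp_const.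
    apply cp_mult. apply cp_mult. apply cp_const. apply cp_minus; auto.
    apply cp_plus; auto. apply cp_plus; auto.
    apply cp_mult; auto. apply cp_const.
Qed.

Lemma KK_pos : 0 < KK.
Proof. unfold KK. pose proof Y0_nonneg. apply Rmult_lt_0_compat; lra. Qed.

Definition Ig1 (P Q : R -> R) s := G1 s (ext tau P s) (ext tau Q s).
Definition Ig2 (P Q : R -> R) s := G2 s (ext tau P s) (ext tau Q s).

Lemma Ig_cont P Q : contR tau P -> contR tau Q -> forall s, 0 < s ->
  continuous (Ig1 P Q) s /\ continuous (Ig2 P Q) s.
Proof.
  intros HP HQ s Hs. destruct (G_cont (ext tau P) (ext tau Q) s Hs) as [A B].
  apply ext_cont; auto. apply ext_cont; auto. split; apply cont_of_pt; auto.
Qed.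

Lemma Ig_bd P Q s : 0 <= s -> Rabs (Ig1 P Q s) <= KK /\ Rabs (Ig2 P Q s) <= KK.
Proof. intros; apply G_bd; auto. Qed.

Lemma ex_RI (f : R -> R) a c : (forall s, 0 < s -> continuous f s) -> tau <= a -> tau <= c -> ex_RInt f a c.
Proof.
  intros Hc Ha Hcc. apply (@ex_RInt_continuous R_CompleteNormedModule). intros z Hz. apply Hc.
  assert (Rmin a c >= tau) by (unfold Rmin; destruct Rle_dec; lra). lra.
Qed.

Fixpoint pic (n : nat) : (R -> R) * (R -> R) :=
  match n with
  | O => (fun _ => u0, fun _ => v0)
  | S n => (fun t => u0 + RI (Ig1 (fst (pic n)) (snd (pic n))) tau t,
            fun t => v0 + RI (Ig2 (fst (pic n)) (snd (pic n))) tau t)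
  end.

Lemma pic_lip n : forall t t', tau <= t -> tau <= t' ->
  Rabs (fst (pic n) t - fst (pic n) t') <= KK * Rabs (t - t') /\
  Rabs (snd (pic n) t - snd (pic n) t') <= KK * Rabs (t - t').
Proof.
  pose proof KK_pos. induction n; intros t t' Ht Ht'.
  - simpl. rewrite !Rminus_diag, !Rabs_R0. pose proof (Rabs_pos (t - t')). split; nra.
  - assert (HP : contR tau (fst (pic n))) by (apply (lip_contR tau _ KK); try lra; intros; apply IHn; auto).
    assert (HQ : contR tau (snd (pic n))) by (apply (lip_contR tau _ KK); try lra; intros; apply IHn; auto).
    simpl. replace (u0 + RI (Ig1 (fst (pic n)) (snd (pic n))) tau t - (u0 + RI (Ig1 (fst (pic n)) (snd (pic n))) tau t'))
      with (RI (Ig1 (fst (pic n)) (snd (pic n))) tau t - RI (Ig1 (fst (pic n)) (snd (pic n))) tau t') by ring.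
    replace (v0 + RI (Ig2 (fst (pic n)) (snd (pic n))) tau t - (v0 + RI (Ig2 (fst (pic n)) (snd (pic n))) tau t'))
      with (RI (Ig2 (fst (pic n)) (snd (pic n))) tau t - RI (Ig2 (fst (pic n)) (snd (pic n))) tau t') by ring.
    split; apply RInt_lip; auto; intros s Hs.
    apply (Ig_cont _ _ HP HQ s Hs). apply (Ig_bd _ _ s Hs). apply (Ig_cont _ _ HP HQ s Hs). apply (Ig_bd _ _ s Hs).
Qed.

Lemma pic_cont n : contR tau (fst (pic n)) /\ contR tau (snd (pic n)).
Proof.
  pose proof KK_pos. split; apply (lip_contR tau _ KK); try lra; intros; apply pic_lip; auto.
Qed.

Lemma RI_exp C k t : 0 < k -> RI (fun s => C * exp (k * (s - tau))) tau t = C * (exp (k * (t - tau)) - 1) / k.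
Proof.
  intros Hk. unfold RI. apply is_RInt_unique.
  assert (E : minus ((fun s => C * exp (k * (s - tau)) / k) t) ((fun s => C * exp (k * (s - tau)) / k) tau)
     = C * (exp (k * (t - tau)) - 1) / k).
  { unfold minus, plus, opp; simpl. replace (tau - tau) with 0 by ring. rewrite Rmult_0_r, exp_0. field. lra. }
  rewrite <- E.
  apply (@is_RInt_derive R_CompleteNormedModule (fun s => C * exp (k * (s - tau)) / k)).
  - intros x _. auto_derive. auto. replace (x + - tau) with (x - tau) by ring. field. lra.
  - intros x _. apply cont_of_pt. apply cp_mult. apply cp_const. apply cp_exp. apply cp_mult. apply cp_const.
    apply cp_minus. apply derivable_continuous_pt, derivable_pt_id. apply cp_const.
Qed.

Lemma int_diff P Q P' Q' c k t : contR tau P -> contR tau Q -> contR tau P' -> contR tau Q' ->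
  0 <= c -> 0 < k -> tau <= t ->
  (forall s, tau <= s <= t -> Rabs (P s - P' s) + Rabs (Q s - Q' s) <= c * exp (k * (s - tau))) ->
  Rabs (RI (Ig1 P Q) tau t - RI (Ig1 P' Q') tau t) <= KK * c * (exp (k * (t - tau)) - 1) / k /\
  Rabs (RI (Ig2 P Q) tau t - RI (Ig2 P' Q') tau t) <= KK * c * (exp (k * (t - tau)) - 1) / k.
Proof.
  intros HP HQ HP' HQ' Hc Hk Ht Hb. pose proof KK_pos.
  assert (Hexp : forall s, continuous (fun s => KK * c * exp (k * (s - tau))) s).
  { intros s. apply cont_of_pt. apply cp_mult. apply cp_const. apply cp_exp. apply cp_mult. apply cp_const.
    apply cp_minus. apply derivable_continuous_pt, derivable_pt_id. apply cp_const. }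
  assert (Gen : forall (f g : R -> R), (forall s, 0 < s -> continuous f s) -> (forall s, 0 < s -> continuous g s) ->
     (forall s, tau <= s <= t -> Rabs (f s - g s) <= KK * c * exp (k * (s - tau))) ->
     Rabs (RI f tau t - RI g tau t) <= KK * c * (exp (k * (t - tau)) - 1) / k).
  { intros f g Hf Hg Hfg.
    assert (Hh : forall s, 0 < s -> continuous (fun s => f s - g s) s).
    { intros s Hs. apply cont_of_pt. apply cp_minus.
      apply (proj2 (continuity_pt_filterlim f s)); apply Hf; auto.
      apply (proj2 (continuity_pt_filterlim g s)); apply Hg; auto. }
    assert (E : RI f tau t - RI g tau t = RI (fun s => f s - g s) tau t).
    { unfold RI. symmetry. apply (RInt_minus f g); apply ex_RI; auto; lra. }
    rewrite E. rewrite <- RI_exp by auto. unfold RI.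
    eapply Rle_trans. { apply abs_RInt_le. lra. apply ex_RI; auto; lra. }
    apply RInt_le. lra.
    - apply ex_RI; auto; try lra. intros s Hs. apply cont_of_pt. apply cp_abs.
      apply (proj2 (continuity_pt_filterlim _ s)). apply Hh; lra.
    - apply (@ex_RInt_continuous R_CompleteNormedModule). intros; apply Hexp.
    - intros s Hs. apply Hfg. lra. }
  assert (Hbs : forall s, tau <= s <= t -> forall (G : R -> R -> R -> R),
      (forall s u v u' v', 0 <= s -> Rabs (G s u v - G s u' v') <= KK * (Rabs (u - u') + Rabs (v - v'))) ->
      Rabs (G s (ext tau P s) (ext tau Q s) - G s (ext tau P' s) (ext tau Q' s)) <= KK * c * exp (k * (s - tau))).
  { intros s Hs G HG'. eapply Rle_trans. apply HG'. lra. rewrite !ext_eq by lra.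
    rewrite Rmult_assoc. apply Rmult_le_compat_l. lra. apply Hb; auto. }
  split; apply Gen.
  1,4: intros s Hs; apply (Ig_cont P Q HP HQ s Hs).
  1,3: intros s Hs; apply (Ig_cont P' Q' HP' HQ' s Hs).
  - intros s Hs. apply (Hbs s Hs G1). intros; apply G_lip; auto.
  - intros s Hs. apply (Hbs s Hs G2). intros; apply G_lip; auto.
Qed.

Definition dl n t := Rabs (fst (pic (S n)) t - fst (pic n) t) + Rabs (snd (pic (S n)) t - snd (pic n) t).

Lemma dl_bd n : forall t, tau <= t -> dl n t <= (1/2)^n * exp (4 * KK * (t - tau)).
Proof.
  pose proof KK_pos. induction n; intros t Ht.
  - unfold dl. simpl. 
    replace (u0 + RI (Ig1 (fun _ => u0) (fun _ => v0)) tau t - u0) with (RI (Ig1 (fun _ => u0) (fun _ => v0)) tau t - RI (Ig1 (fun _ => u0) (fun _ => v0)) tau tau).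
    2:{ rewrite RI_point. ring. }
    replace (v0 + RI (Ig2 (fun _ => u0) (fun _ => v0)) tau t - v0) with (RI (Ig2 (fun _ => u0) (fun _ => v0)) tau t - RI (Ig2 (fun _ => u0) (fun _ => v0)) tau tau).
    2:{ rewrite RI_point. ring. }
    assert (Hc0 : contR tau (fun _ : R => u0)) by apply cconst.
    assert (Hc1 : contR tau (fun _ : R => v0)) by apply cconst.
    assert (A1 := RInt_lip (Ig1 (fun _ => u0) (fun _ => v0)) KK tau t tau Htau
                   (fun s Hs => proj1 (Ig_cont _ _ Hc0 Hc1 s Hs)) (fun s Hs => proj1 (Ig_bd _ _ s Hs)) Ht (Rle_refl _)).
    assert (A2 := RInt_lip (Ig2 (fun _ => u0) (fun _ => v0)) KK tau t tau Htau
                   (fun s Hs => proj2 (Ig_cont _ _ Hc0 Hc1 s Hs)) (fun s Hs => proj2 (Ig_bd _ _ s Hs)) Ht (Rle_refl _)).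
    rewrite (Rabs_right (t - tau)) in A1, A2 by lra.
    pose proof (exp_ineq1_le (4 * KK * (t - tau))). simpl. nra.
  - destruct (pic_cont n) as [Hp1 Hp2]. destruct (pic_cont (S n)) as [Hq1 Hq2].
    destruct (int_diff (fst (pic (S n))) (snd (pic (S n))) (fst (pic n)) (snd (pic n)) ((1/2)^n) (4 * KK) t
      Hq1 Hq2 Hp1 Hp2 ltac:(apply pow_le; lra) ltac:(lra) Ht) as [B1 B2].
    { intros s Hs. apply IHn. lra. }
    unfold dl. change (fst (pic (S (S n))) t) with (u0 + RI (Ig1 (fst (pic (S n))) (snd (pic (S n)))) tau t).
    change (snd (pic (S (S n))) t) with (v0 + RI (Ig2 (fst (pic (S n))) (snd (pic (S n)))) tau t).
    change (fst (pic (S n)) t) with (u0 + RI (Ig1 (fst (pic n)) (snd (pic n))) tau t).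
    change (snd (pic (S n)) t) with (v0 + RI (Ig2 (fst (pic n)) (snd (pic n))) tau t).
    replace (u0 + RI (Ig1 (fst (pic (S n))) (snd (pic (S n)))) tau t - (u0 + RI (Ig1 (fst (pic n)) (snd (pic n))) tau t))
      with (RI (Ig1 (fst (pic (S n))) (snd (pic (S n)))) tau t - RI (Ig1 (fst (pic n)) (snd (pic n))) tau t) by ring.
    replace (v0 + RI (Ig2 (fst (pic (S n))) (snd (pic (S n)))) tau t - (v0 + RI (Ig2 (fst (pic n)) (snd (pic n))) tau t))
      with (RI (Ig2 (fst (pic (S n))) (snd (pic (S n)))) tau t - RI (Ig2 (fst (pic n)) (snd (pic n))) tau t) by ring.
    assert (E : KK * (1/2)^n * (exp (4 * KK * (t - tau)) - 1) / (4 * KK) = (1/2)^n * (exp (4 * KK * (t - tau)) - 1) / 4).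
    { field. lra. }
    rewrite E in B1, B2. change ((1/2)^(S n)) with (1/2 * (1/2)^n). assert (0 <= (1/2)^n) by (apply pow_le; lra).
    set (p := (1/2)^n) in *. set (e := exp (4 * KK * (t - tau))) in *. lra.
Qed.

Definition EE t := exp (4 * KK * (t - tau)).

Lemma EE_pos t : 0 < EE t.
Proof. apply exp_pos. Qed.

Lemma tele t : tau <= t -> forall j n,
  Rabs (fst (pic (n + j)) t - fst (pic n) t) <= 2 * EE t * ((1/2)^n - (1/2)^(n + j)) /\
  Rabs (snd (pic (n + j)) t - snd (pic n) t) <= 2 * EE t * ((1/2)^n - (1/2)^(n + j)).
Proof.
  intros Ht. induction j; intros n.
  - rewrite Nat.add_0_r, !Rminus_diag, Rabs_R0. split; lra.
  - destruct (IHj n) as [A B]. pose proof (dl_bd (n + j) t Ht) as D. unfold dl in D. fold (EE t) in D.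
    replace (n + S j)%nat with (S (n + j)) by lia.
    change ((1/2)^(S (n + j))) with (1/2 * (1/2)^(n + j)).
    pose proof (Rabs_pos (fst (pic (S (n + j))) t - fst (pic (n + j)) t)).
    pose proof (Rabs_pos (snd (pic (S (n + j))) t - snd (pic (n + j)) t)).
    set (p := (1/2)^(n+j)) in *. set (e := EE t) in *.
    split.
    + eapply Rle_trans. 
      replace (fst (pic (S (n + j))) t - fst (pic n) t) with
        ((fst (pic (S (n + j))) t - fst (pic (n + j)) t) + (fst (pic (n + j)) t - fst (pic n) t)) by ring.
      apply Rabs_triang. lra.
    + eapply Rle_trans. 
      replace (snd (pic (S (n + j))) t - snd (pic n) t) with
        ((snd (pic (S (n + j))) t - snd (pic (n + j)) t) + (snd (pic (n + j)) t - snd (pic n) t)) by ring.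
      apply Rabs_triang. lra.
Qed.

Lemma tele' t : tau <= t -> forall n m, (n <= m)%nat ->
  Rabs (fst (pic m) t - fst (pic n) t) <= 2 * EE t * (1/2)^n /\
  Rabs (snd (pic m) t - snd (pic n) t) <= 2 * EE t * (1/2)^n.
Proof.
  intros Ht n m Hnm. replace m with (n + (m - n))%nat by lia.
  destruct (tele t Ht (m - n) n) as [A B]. pose proof (EE_pos t).
  assert (0 <= (1/2)^(n + (m - n))) by (apply pow_le; lra). split; nra.
Qed.

Lemma small_pow c eps : 0 <= c -> 0 < eps -> exists N, forall n, (N <= n)%nat -> c * (1/2)^n < eps.
Proof.
  intros Hc He. destruct (pow_lt_1_zero (1/2) ltac:(rewrite Rabs_right; lra) (eps / (c + 1))) as [N HN].
  apply Rdiv_lt_0_compat; lra.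
  exists N. intros n Hn. specialize (HN n Hn). assert (0 <= (1/2)^n) by (apply pow_le; lra).
  rewrite Rabs_right in HN by lra.
  assert (c * (1/2)^n <= c * (eps / (c + 1))) by (apply Rmult_le_compat_l; lra).
  assert (c * (eps / (c + 1)) < eps). { apply Rmult_lt_reg_r with (c + 1). lra. field_simplify; nra. }
  lra.
Qed.

Lemma pow_half_le1 k : (1/2)^k <= 1.
Proof. induction k; simpl. lra. assert (0 <= (1/2)^k) by (apply pow_le; lra). nra. Qed.

Lemma pow_half_mono n m : (n <= m)%nat -> (1/2)^m <= (1/2)^n.
Proof.
  intros H. replace m with (n + (m - n))%nat by lia. rewrite pow_add.
  assert (0 <= (1/2)^n) by (apply pow_le; lra).
  assert ((1/2)^(m - n) <= 1) by apply pow_half_le1.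
  assert (0 <= (1/2)^(m - n)) by (apply pow_le; lra). nra.
Qed.

Lemma lim_gen (u : nat -> R) C : 0 <= C ->
  (forall n m, (n <= m)%nat -> Rabs (u m - u n) <= C * (1/2)^n) ->
  forall n, Rabs (real (Lim_seq u) - u n) <= C * (1/2)^n.
Proof.
  intros HC H.
  assert (Hex : ex_finite_lim_seq u).
  { apply ex_lim_seq_cauchy_corr. intros eps. destruct (small_pow C eps HC (cond_pos eps)) as [N HN].
    exists N. intros n m Hn Hm. destruct (Nat.le_ge_cases n m).
    - rewrite <- Rabs_Ropp. replace (- (u n - u m)) with (u m - u n) by ring.
      eapply Rle_lt_trans. apply H; auto. apply HN; auto.
    - eapply Rle_lt_trans. apply H; auto. apply HN; auto. }
  destruct Hex as [l Hl]. pose proof (is_lim_seq_unique u l Hl) as E. rewrite E. simpl.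
  intros n. apply Rnot_lt_le. intro Hlt.
  apply is_lim_seq_spec in Hl.
  destruct (Hl (mkposreal _ (Rlt_Rminus _ _ Hlt))) as [N HN]. simpl in HN.
  specialize (HN (max N n) (Nat.le_max_l _ _)). specialize (H n (max N n) (Nat.le_max_r _ _)).
  pose proof (Rabs_triang (l - u (max N n)) (u (max N n) - u n)).
  replace (l - u (max N n) + (u (max N n) - u n)) with (l - u n) in H0 by ring.
  rewrite <- Rabs_Ropp in HN. replace (- (u (max N n) - l)) with (l - u (max N n)) in HN by ring.
  lra.
Qed.

Definition Pinf t := real (Lim_seq (fun n => fst (pic n) t)).
Definition Qinf t := real (Lim_seq (fun n => snd (pic n) t)).

Lemma inf_bd t n : tau <= t ->
  Rabs (Pinf t - fst (pic n) t) <= 2 * EE t * (1/2)^n /\ Rabs (Qinf t - snd (pic n) t) <= 2 * EE t * (1/2)^n.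
Proof.
  intros Ht. pose proof (EE_pos t). unfold Pinf, Qinf. split.
  apply (lim_gen (fun n => fst (pic n) t)). lra. intros; apply tele'; auto.
  apply (lim_gen (fun n => snd (pic n) t)). lra. intros; apply tele'; auto.
Qed.

Lemma inf_lip t t' : tau <= t -> tau <= t' ->
  Rabs (Pinf t - Pinf t') <= KK * Rabs (t - t') /\ Rabs (Qinf t - Qinf t') <= KK * Rabs (t - t').
Proof.
  intros Ht Ht'. pose proof (EE_pos t). pose proof (EE_pos t').
  split; apply (vanish _ _ (2 * EE t + 2 * EE t')); try lra; intros n;
   destruct (inf_bd t n Ht) as [A1 A2]; destruct (inf_bd t' n Ht') as [B1 B2];
   destruct (pic_lip n t t' Ht Ht') as [C1 C2].
  - pose proof (Rabs_triang (Pinf t - fst (pic n) t) (fst (pic n) t - Pinf t')).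
    pose proof (Rabs_triang (fst (pic n) t - fst (pic n) t') (fst (pic n) t' - Pinf t')).
    replace (Pinf t - fst (pic n) t + (fst (pic n) t - Pinf t')) with (Pinf t - Pinf t') in H1 by ring.
    replace (fst (pic n) t - fst (pic n) t' + (fst (pic n) t' - Pinf t')) with (fst (pic n) t - Pinf t') in H2 by ring.
    rewrite <- Rabs_Ropp in B1. replace (- (Pinf t' - fst (pic n) t')) with (fst (pic n) t' - Pinf t') in B1 by ring.
    lra.
  - pose proof (Rabs_triang (Qinf t - snd (pic n) t) (snd (pic n) t - Qinf t')).
    pose proof (Rabs_triang (snd (pic n) t - snd (pic n) t') (snd (pic n) t' - Qinf t')).
    replace (Qinf t - snd (pic n) t + (snd (pic n) t - Qinf t')) with (Qinf t - Qinf t') in H1 by ring.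
    replace (snd (pic n) t - snd (pic n) t' + (snd (pic n) t' - Qinf t')) with (snd (pic n) t - Qinf t') in H2 by ring.
    rewrite <- Rabs_Ropp in B2. replace (- (Qinf t' - snd (pic n) t')) with (snd (pic n) t' - Qinf t') in B2 by ring.
    lra.
Qed.

Lemma inf_cont : contR tau Pinf /\ contR tau Qinf.
Proof.
  pose proof KK_pos. split; apply (lip_contR tau _ KK); try lra; intros; apply inf_lip; auto.
Qed.

Lemma eq_of_vanish x y c : 0 <= c -> (forall n, Rabs (x - y) <= c * (1/2)^n) -> x = y.
Proof.
  intros Hc H. assert (Rabs (x - y) <= 0). { apply (vanish _ _ c Hc). intros n. specialize (H n). lra. }
  pose proof (Rabs_pos (x - y)). assert (Rabs (x - y) = 0) by lra.
  apply Rabs_eq_0 in H2. lra.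
Qed.

Lemma inf_eq t : tau <= t -> Pinf t = u0 + RI (Ig1 Pinf Qinf) tau t /\ Qinf t = v0 + RI (Ig2 Pinf Qinf) tau t.
Proof.
  intros Ht. pose proof KK_pos. pose proof (EE_pos t). destruct inf_cont as [HPi HQi].
  assert (Hn : forall n, Rabs (RI (Ig1 (fst (pic n)) (snd (pic n))) tau t - RI (Ig1 Pinf Qinf) tau t) <= (1/2)^n * (EE t - 1)
                 /\ Rabs (RI (Ig2 (fst (pic n)) (snd (pic n))) tau t - RI (Ig2 Pinf Qinf) tau t) <= (1/2)^n * (EE t - 1)).
  { intros n. destruct (pic_cont n) as [Hp1 Hp2].
    destruct (int_diff (fst (pic n)) (snd (pic n)) Pinf Qinf (4 * (1/2)^n) (4 * KK) t Hp1 Hp2 HPi HQi) as [A B].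
    assert (0 <= (1/2)^n) by (apply pow_le; lra). lra. lra. auto.
    { intros s Hs. destruct (inf_bd s n ltac:(lra)) as [C D]. rewrite <- Rabs_Ropp in C, D.
      replace (- (Pinf s - fst (pic n) s)) with (fst (pic n) s - Pinf s) in C by ring.
      replace (- (Qinf s - snd (pic n) s)) with (snd (pic n) s - Qinf s) in D by ring.
      fold (EE s). lra. }
    fold (EE t) in A, B.
    replace (KK * (4 * (1/2)^n) * (EE t - 1) / (4 * KK)) with ((1/2)^n * (EE t - 1)) in A, B by (field; lra).
    auto. }
  split; apply (eq_of_vanish _ _ (2 * EE t)); try lra; intros n;
    destruct (inf_bd t (S n) Ht) as [A B]; destruct (Hn n) as [C D];
    change ((1/2)^(S n)) with (1/2 * (1/2)^n) in A, B; assert (0 <= (1/2)^n) by (apply pow_le; lra).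
  - change (fst (pic (S n)) t) with (u0 + RI (Ig1 (fst (pic n)) (snd (pic n))) tau t) in A.
    pose proof (Rabs_triang (Pinf t - (u0 + RI (Ig1 (fst (pic n)) (snd (pic n))) tau t))
                  (RI (Ig1 (fst (pic n)) (snd (pic n))) tau t - RI (Ig1 Pinf Qinf) tau t)).
    replace (Pinf t - (u0 + RI (Ig1 (fst (pic n)) (snd (pic n))) tau t) +
       (RI (Ig1 (fst (pic n)) (snd (pic n))) tau t - RI (Ig1 Pinf Qinf) tau t)) with
      (Pinf t - (u0 + RI (Ig1 Pinf Qinf) tau t)) in H2 by ring.
    set (p := (1/2)^n) in *. set (e := EE t) in *. nra.
  - change (snd (pic (S n)) t) with (v0 + RI (Ig2 (fst (pic n)) (snd (pic n))) tau t) in B.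
    pose proof (Rabs_triang (Qinf t - (v0 + RI (Ig2 (fst (pic n)) (snd (pic n))) tau t))
                  (RI (Ig2 (fst (pic n)) (snd (pic n))) tau t - RI (Ig2 Pinf Qinf) tau t)).
    replace (Qinf t - (v0 + RI (Ig2 (fst (pic n)) (snd (pic n))) tau t) +
       (RI (Ig2 (fst (pic n)) (snd (pic n))) tau t - RI (Ig2 Pinf Qinf) tau t)) with
      (Qinf t - (v0 + RI (Ig2 Pinf Qinf) tau t)) in H2 by ring.
    set (p := (1/2)^n) in *. set (e := EE t) in *. nra.
Qed.

Lemma RI_derive (J : R -> R) t : tau < t -> (forall s, 0 < s -> continuous J s) ->
  derivable_pt_lim (fun x => RI J tau x) t (J t).
Proof.
  intros Ht HJ. apply is_derive_Reals. unfold RI.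
  apply (@is_derive_RInt R_NormedModule J (fun x => RInt J tau x) tau t).
  - exists (mkposreal (t - tau) ltac:(lra)). intros x Hx.
    unfold ball in Hx; simpl in Hx; unfold AbsRing_ball, abs, minus, plus, opp in Hx; simpl in Hx.
    apply Rabs_def2 in Hx.
    apply (@RInt_correct R_CompleteNormedModule). apply ex_RI; auto; lra.
  - apply HJ. lra.
Qed.

Lemma inf_deriv t : tau < t ->
  derivable_pt_lim Pinf t (G1 t (Pinf t) (Qinf t)) /\ derivable_pt_lim Qinf t (G2 t (Pinf t) (Qinf t)).
Proof.
  intros Ht. destruct inf_cont as [HPi HQi].
  assert (Hloc : forall (F : R -> R) c J, (forall x, tau <= x -> F x = c + RI J tau x) ->
      (forall s, 0 < s -> continuous J s) -> derivable_pt_lim F t (J t)).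
  { intros F c J HF HJ. apply is_derive_Reals.
    apply (is_derive_ext_loc (fun x => c + RI J tau x)).
    - exists (mkposreal (t - tau) ltac:(lra)). intros x Hx.
      unfold ball in Hx; simpl in Hx; unfold AbsRing_ball, abs, minus, plus, opp in Hx; simpl in Hx.
      apply Rabs_def2 in Hx. symmetry. apply HF. lra.
    - apply is_derive_Reals. replace (J t) with (0 + J t) by ring. apply dplus. apply dconst.
      apply RI_derive; auto. }
  split.
  - replace (G1 t (Pinf t) (Qinf t)) with (Ig1 Pinf Qinf t) by (unfold Ig1; rewrite !ext_eq by lra; auto).
    apply (Hloc Pinf u0). intros; apply inf_eq; auto. intros s Hs; apply (Ig_cont _ _ HPi HQi s Hs).
  - replace (G2 t (Pinf t) (Qinf t)) with (Ig2 Pinf Qinf t) by (unfold Ig2; rewrite !ext_eq by lra; auto).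
    apply (Hloc Qinf v0). intros; apply inf_eq; auto. intros s Hs; apply (Ig_cont _ _ HPi HQi s Hs).
Qed.

Lemma inf_init : Pinf tau = u0 /\ Qinf tau = v0.
Proof. destruct (inf_eq tau ltac:(lra)) as [A B]. rewrite !RI_point in A, B. lra. Qed.

Hypotheses (Hbdd : forall t, 0 < t -> derivable_pt_lim b t (beta * d t) /\
    derivable_pt_lim d t (- beta * d t + lambda * Gamma * d t * (1 - b t - d t)))
  (Hu0 : 0 <= u0 <= b tau) (Hv0 : 0 <= v0 <= d tau).

Lemma contR_mono a f : contR 0 f -> 0 <= a -> contR a f.
Proof.
  intros H Ha t Ht eps He. destruct (H t ltac:(lra) eps He) as [alp [Hal Hal2]].
  exists alp; split; auto. intros x [Hx1 Hx2]. apply Hal2. split; auto. unfold D_x in *. lra.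
Qed.

Definition gP (j : nat) : R -> R := match j with
  | O => Pinf | 1 => Qinf | 2 => fun t => b t - Pinf t | _ => fun t => d t - Qinf t end.

Lemma inf_inv : forall t, tau <= t -> 0 <= Pinf t <= b t /\ 0 <= Qinf t <= d t.
Proof.
  destruct inf_cont as [HPi HQi]. destruct inf_init as [I1 I2].
  assert (Hcb' := contR_mono tau b Hcb ltac:(lra)). assert (Hcd' := contR_mono tau d Hcd ltac:(lra)).
  assert (Hc : forall i, (i < 4)%nat -> contR tau (gP i)).
  { intros [|[|[|[|i]]]] Hi; simpl; try lia; auto; apply cminus; auto. }
  assert (Hi0 : forall i, (i < 4)%nat -> 0 <= gP i tau).
  { intros [|[|[|[|i]]]] Hi; simpl; try lia; rewrite ?I1, ?I2; lra. }
  assert (H := PL tau gP 4 Hc Hi0).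
  assert (Hd : forall K, exists L l, 0 <= L /\ forall t, tau < t <= K -> ~ In t l ->
      forall i, (i < 4)%nat -> gP i t < 0 ->
      exists g', derivable_pt_lim (gP i) t g' /\ - L * negs gP 4 t <= g').
  { intros K. exists 0, nil. split. lra. intros t Ht _ i Hi Hneg.
    destruct (inf_deriv t ltac:(lra)) as [D1 D2]. destruct (Hbdd t ltac:(lra)) as [Db Dd].
    destruct (Hb01 t ltac:(lra)) as [B1 [B2 B3]]. destruct (yE_bd t ltac:(lra)) as [Y1 Y2].
    assert (Hneg0 := negs_ge0 gP 4 t).
    replace (-0 * negs gP 4 t) with 0 by ring.
    destruct (clamp_spec (b t) (Pinf t) B1) as [A1 [A2 [A3 A4]]].
    destruct (clamp_spec (d t) (Qinf t) B2) as [E1 [E2 [E3 E4]]].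
    assert (HGl : 0 <= Gamma * lambda) by (apply Rmult_le_pos; lra).
    destruct i as [|[|[|[|i]]]]; simpl in Hneg; try lia.
    - exists (G1 t (Pinf t) (Qinf t)). split. auto. unfold G1, c1, c2. rewrite A1 by lra.
      assert (0 <= lambda * (b t - 0) * (0 + clamp (d t) (Qinf t) + yE t)) by (apply Rmult_le_pos; nra).
      nra.
    - exists (G2 t (Pinf t) (Qinf t)). split. auto. unfold G2, c1, c2. rewrite E1 by lra.
      assert (0 <= Gamma * lambda * (d t - 0) * yE t) by (apply Rmult_le_pos; nra).
      assert (0 <= lambda * (d t - 0) * (clamp (b t) (Pinf t) + 0 + yE t)) by (apply Rmult_le_pos; nra).
      nra.
    - exists (beta * d t - G1 t (Pinf t) (Qinf t)). split. apply dmin; auto.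
      unfold G1, c1, c2. rewrite A2 by lra. nra.
    - exists (- beta * d t + lambda * Gamma * d t * (1 - b t - d t) - G2 t (Pinf t) (Qinf t)). split. apply dmin; auto.
      unfold G2, c1, c2. rewrite E2 by lra. nra. }
  intros t Ht.
  pose proof (H Hd 0%nat t ltac:(lia) Ht). pose proof (H Hd 1%nat t ltac:(lia) Ht).
  pose proof (H Hd 2%nat t ltac:(lia) Ht). pose proof (H Hd 3%nat t ltac:(lia) Ht).
  simpl in *. lra.
Qed.

Lemma yE_deriv t : 0 < t -> derivable_pt_lim yE t (- Gamma * lambda * d t * yE t).
Proof.
  intros Ht. destruct (Hbdd t Ht) as [Db _]. unfold yE.
  set (c := - (Gamma * lambda / beta)).
  assert (H1 : derivable_pt_lim (fun x => c * (b x - b tau)) t (c * (beta * d t - 0))).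
  { apply (derivable_pt_lim_scal (fun x => b x - b tau) c t). apply dmin; auto. apply dconst. }
  assert (H2 := derivable_pt_lim_comp (fun x => c * (b x - b tau)) exp t _ _ H1 (derivable_pt_lim_exp _)).
  assert (H3 := derivable_pt_lim_scal _ w0 t _ H2).
  replace (- Gamma * lambda * d t * (w0 * exp (c * (b t - b tau)))) with
    (w0 * (exp (c * (b t - b tau)) * (c * (beta * d t - 0)))).
  exact H3. unfold c. field. lra.
Qed.

Lemma sol_after t : tau < t ->
  derivable_pt_lim Pinf t (beta * Qinf t + lambda * (b t - Pinf t) * ((Pinf t + Qinf t) + yE t)) /\
  derivable_pt_lim Qinf t (Gamma * lambda * (d t - Qinf t) * yE t + Gamma * lambda * Qinf t * (1 - b t - d t)
       + lambda * (d t - Qinf t) * ((Pinf t + Qinf t) + yE t) - beta * Qinf t) /\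
  derivable_pt_lim yE t (- Gamma * lambda * d t * yE t
       + lambda * 0 * ((1 - b t - d t) - yE t) * (Pinf t + yE t + (1 - Gamma) * Qinf t)).
Proof.
  intros Ht. destruct (inf_deriv t Ht) as [D1 D2]. destruct (inf_inv t ltac:(lra)) as [[P1 P2] [Q1 Q2]].
  destruct (Hb01 t ltac:(lra)) as [B1 [B2 B3]].
  destruct (clamp_spec (b t) (Pinf t) B1) as [A1 [A2 [A3 A4]]].
  destruct (clamp_spec (d t) (Qinf t) B2) as [E1 [E2 [E3 E4]]].
  unfold G1, G2, c1, c2 in D1, D2. rewrite A3, E3 in D1, D2 by lra.
  split. replace (beta * Qinf t + lambda * (b t - Pinf t) * ((Pinf t + Qinf t) + yE t)) with
    (beta * Qinf t + lambda * (b t - Pinf t) * (Pinf t + Qinf t + yE t)) by ring. auto.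
  split. replace (Gamma * lambda * (d t - Qinf t) * yE t + Gamma * lambda * Qinf t * (1 - b t - d t)
       + lambda * (d t - Qinf t) * ((Pinf t + Qinf t) + yE t) - beta * Qinf t) with
    (Gamma * lambda * (d t - Qinf t) * yE t + Gamma * lambda * Qinf t * (1 - b t - d t)
       + lambda * (d t - Qinf t) * (Pinf t + Qinf t + yE t) - beta * Qinf t) by ring. auto.
  replace (- Gamma * lambda * d t * yE t
       + lambda * 0 * ((1 - b t - d t) - yE t) * (Pinf t + yE t + (1 - Gamma) * Qinf t)) with
    (- Gamma * lambda * d t * yE t) by ring. apply yE_deriv. lra.
Qed.

Lemma yE_cont : contR 0 yE.
Proof.
  intros t Ht. unfold yE. apply limit_mul. apply (cconst 0 w0 t Ht).
  assert (H : limit1_in (fun x => - (Gamma * lambda / beta) * (b x - b tau)) (fun s => 0 <= s)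
                (- (Gamma * lambda / beta) * (b t - b tau)) t).
  { apply limit_mul. apply (cconst 0 _ t Ht). apply limit_minus. apply Hcb; auto. apply (cconst 0 _ t Ht). }
  intros eps He. destruct (derivable_continuous_pt _ _ (derivable_pt_exp (- (Gamma * lambda / beta) * (b t - b tau))) eps He)
    as [alp [Ha Hal]].
  destruct (H alp Ha) as [bet [Hb Hbet]].
  exists bet; split; auto. intros x Hx. 
  destruct (Req_dec (- (Gamma * lambda / beta) * (b x - b tau)) (- (Gamma * lambda / beta) * (b t - b tau))) as [e|ne].
  simpl. unfold R_dist. rewrite e, Rminus_diag, Rabs_R0. auto.
  apply Hal. split. split. exact I. auto. apply Hbet; auto.
Qed.

End Picard.


Definition glue (f g : R -> R) (tau : R) (t : R) : R := if Rle_dec t tau then f t else g t.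

Lemma glue_cont f g tau : 0 < tau -> contR 0 f -> contR tau g -> f tau = g tau -> contR 0 (glue f g tau).
Proof.
  intros Ht Hf Hg He t Ht0 eps Heps. unfold glue.
  destruct (Rlt_le_dec t tau) as [Hlt|Hge].
  - destruct (Hf t Ht0 eps Heps) as [alp [Ha Hal]].
    exists (Rmin alp (tau - t)). split. apply Rmin_pos; lra.
    intros x [Hx1 Hx2]. simpl in *. unfold R_dist in *.
    assert (Rmin alp (tau - t) <= alp) by apply Rmin_l. assert (Rmin alp (tau - t) <= tau - t) by apply Rmin_r.
    apply Rabs_def2 in Hx2.
    destruct (Rle_dec x tau); [|lra]. destruct (Rle_dec t tau); [|lra].
    apply Hal. split; auto. simpl; unfold R_dist. apply Rabs_def1; lra.
  - destruct (Req_dec t tau) as [e|ne].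
    + subst t. destruct (Hf tau Ht0 eps Heps) as [a1 [Ha1 Hal1]]. destruct (Hg tau (Rle_refl _) eps Heps) as [a2 [Ha2 Hal2]].
      exists (Rmin a1 a2). split. apply Rmin_pos; lra.
      intros x [Hx1 Hx2]. simpl in *. unfold R_dist in *.
      assert (Rmin a1 a2 <= a1) by apply Rmin_l. assert (Rmin a1 a2 <= a2) by apply Rmin_r.
      destruct (Rle_dec tau tau); [|lra].
      destruct (Rle_dec x tau).
      * apply Hal1. split; auto. simpl; unfold R_dist. lra.
      * rewrite He. apply Hal2. split. unfold D_x in *; lra. simpl; unfold R_dist. lra.
    + destruct (Hg t Hge eps Heps) as [alp [Ha Hal]].
      exists (Rmin alp (t - tau)). split. apply Rmin_pos; lra.
      intros x [Hx1 Hx2]. simpl in *. unfold R_dist in *.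
      assert (Rmin alp (t - tau) <= alp) by apply Rmin_l. assert (Rmin alp (t - tau) <= t - tau) by apply Rmin_r.
      apply Rabs_def2 in Hx2.
      destruct (Rle_dec x tau); [lra|]. destruct (Rle_dec t tau); [lra|].
      apply Hal. split. unfold D_x in *; lra. simpl; unfold R_dist. apply Rabs_def1; lra.
Qed.

Lemma glue_left f g tau t l : t < tau -> derivable_pt_lim f t l -> derivable_pt_lim (glue f g tau) t l.
Proof.
  intros Ht Hd. apply is_derive_Reals. apply is_derive_Reals in Hd.
  apply (is_derive_ext_loc f). 2: exact Hd.
  exists (mkposreal (tau - t) ltac:(lra)). intros y Hy. simpl in Hy.
  unfold ball in Hy; simpl in Hy; unfold AbsRing_ball, abs, minus, plus, opp in Hy; simpl in Hy.
  apply Rabs_def2 in Hy. unfold glue. destruct (Rle_dec y tau); auto; lra.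
Qed.

Lemma glue_right f g tau t l : tau < t -> derivable_pt_lim g t l -> derivable_pt_lim (glue f g tau) t l.
Proof.
  intros Ht Hd. apply is_derive_Reals. apply is_derive_Reals in Hd.
  apply (is_derive_ext_loc g). 2: exact Hd.
  exists (mkposreal (t - tau) ltac:(lra)). intros y Hy. simpl in Hy.
  unfold ball in Hy; simpl in Hy; unfold AbsRing_ball, abs, minus, plus, opp in Hy; simpl in Hy.
  apply Rabs_def2 in Hy. unfold glue. destruct (Rle_dec y tau); auto; lra.
Qed.

Lemma glue_l f g tau t : t <= tau -> glue f g tau t = f t.
Proof. intros; unfold glue; destruct (Rle_dec t tau); auto; lra. Qed.
Lemma glue_r f g tau t : tau < t -> glue f g tau t = g t.
Proof. intros; unfold glue; destruct (Rle_dec t tau); auto; lra. Qed.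

Lemma yE_tau lambda beta Gamma tau w0 b : yE lambda beta Gamma tau w0 b tau = w0.
Proof. unfold yE. rewrite Rminus_diag, Rmult_0_r, exp_0. ring. Qed.

Lemma extend (lambda beta Gamma d0 xd0 : R) (b d xb xd y : R -> R) :
  0 < lambda -> 0 < beta -> 0 < Gamma <= 1 -> 0 < xd0 <= d0 -> d0 < 1 ->
  SolBD lambda beta Gamma d0 b d ->
  SolX lambda beta Gamma xd0 b d (threshold None) xb xd y ->
  forall tau, 0 < tau -> exists xb2 xd2 y2,
    SolX lambda beta Gamma xd0 b d (threshold (Some tau)) xb2 xd2 y2 /\
    forall t, 0 <= t <= tau -> xb2 t = xb t /\ xd2 t = xd t /\ y2 t = y t.
Proof.
  intros Hlam Hbeta HG Hx0 Hd0 Hbd Hsol tau Htau.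
  assert (Hd0' : 0 < d0 < 1) by lra.
  assert (Hb01 : forall s, 0 <= s -> 0 <= b s /\ 0 <= d s /\ 0 <= 1 - b s - d s).
  { intros s Hs. destruct (bd_pos lambda beta Gamma d0 b d Hlam Hbeta HG Hd0' Hbd s Hs).
    pose proof (b_nonneg lambda beta Gamma d0 b d Hlam Hbeta HG Hd0' Hbd s Hs). auto. }
  assert (I := inv_all lambda beta Gamma d0 xd0 b d (threshold None) xb xd y Hlam Hbeta HG Hx0 Hd0 Hbd
                 (fun t _ => thr_range None t) (thr_list None) Hsol).
  assert (I0 := I 0%nat tau ltac:(lia) ltac:(lra)). assert (I1 := I 1%nat tau ltac:(lia) ltac:(lra)).
  assert (I2 := I 2%nat tau ltac:(lia) ltac:(lra)). assert (I3 := I 3%nat tau ltac:(lia) ltac:(lra)).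
  assert (I4 := I 4%nat tau ltac:(lia) ltac:(lra)). simpl in I0, I1, I2, I3, I4.
  destruct Hbd as [Hb0 [Hdd0 [Hcb [Hcd Hbder]]]].
  set (u0 := xb tau). set (v0 := xd tau). set (w0 := y tau).
  assert (Hu0 : 0 <= u0 <= b tau) by (unfold u0; lra).
  assert (Hv0 : 0 <= v0 <= d tau) by (unfold v0; lra).
  set (P := Pinf lambda beta Gamma tau u0 v0 w0 b d).
  set (Q := Qinf lambda beta Gamma tau u0 v0 w0 b d).
  set (Y := yE lambda beta Gamma tau w0 b).
  destruct (inf_cont lambda beta Gamma tau u0 v0 w0 b d Hlam Hbeta HG Htau I2 Hb01 Hcb Hcd) as [HcP HcQ].
  destruct (inf_init lambda beta Gamma tau u0 v0 w0 b d Hlam Hbeta HG Htau I2 Hb01 Hcb Hcd) as [HP0 HQ0].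
  assert (HcY := yE_cont lambda beta Gamma tau w0 b Hcb).
  assert (HAfter := sol_after lambda beta Gamma tau u0 v0 w0 b d Hlam Hbeta HG Htau I2 Hb01 Hcb Hcd Hbder Hu0 Hv0).
  fold P Q Y in HcP, HcQ, HP0, HQ0, HcY, HAfter.
  destruct Hsol as [Hxb0 [Hxd0 [Hy0 [Hcxb [Hcxd [Hcy Hder]]]]]].
  exists (glue xb P tau), (glue xd Q tau), (glue y Y tau). split.
  - split. rewrite glue_l by lra; auto. split. rewrite glue_l by lra; auto. split. rewrite glue_l by lra; auto.
    split. apply glue_cont; auto. split. apply glue_cont; auto. split. apply glue_cont; auto.
    apply contR_mono; auto; lra. unfold Y. rewrite yE_tau. auto.
    intros t Ht Hct. cbv zeta.
    destruct (Req_dec t tau) as [e|ne]. subst; exfalso; apply (thr_not_cont tau); auto.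
    destruct (Rlt_le_dec t tau) as [Hlt|Hge].
    + rewrite !glue_l by lra. destruct (Hder t Ht (thr_cont_None t)) as [D1 [D2 D3]].
      assert (Ethr : threshold (Some tau) t = threshold None t).
      { simpl. destruct (Rlt_dec t tau); lra. }
      rewrite Ethr. split; [|split]; apply glue_left; auto.
    + assert (Hgt : tau < t) by lra. rewrite !glue_r by lra.
      assert (Ethr : threshold (Some tau) t = 0) by (simpl; destruct (Rlt_dec t tau); lra).
      rewrite Ethr. destruct (HAfter t Hgt) as [D1 [D2 D3]].
      split; [|split]; apply glue_right; auto.
  - intros t Ht. rewrite !glue_l by lra. auto.
Qed.


Theorem lemma7
  (lambda beta Gamma d0 xd0 alpha psi : R)
  (Hlam : 0 < lambda) (Hbeta : 0 < beta) (HG : 0 < Gamma <= 1)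
  (Hx0 : 0 < xd0 <= d0) (Hd0 : d0 < 1)
  (Halpha : 0 < alpha < 1) (Hpsi : 0 < psi)
  (b d : R -> R) (Hbd : SolBD lambda beta Gamma d0 b d)
  (ainf : R) (Hainf : lim_infty (fun t => b t + d t) ainf)
  (rho_max : R)
  (Hrho : is_lub (RhoSet lambda beta Gamma xd0 alpha ainf b d) rho_max)
  (sigma : R -> R) (Hadm : admissible sigma)
  (xb xd y : R -> R) (Hsol : SolX lambda beta Gamma xd0 b d sigma xb xd y)
  (T : R) (HT : IsTargetTime (fun t => xb t + xd t) (alpha * ainf) T)
  (Hgt : y T > rho_max)
  (tauhat : option R) (Htau : SupPosTime sigma tauhat) :
  forall xb' xd' y' : R -> R,
    SolX lambda beta Gamma xd0 b d (threshold tauhat) xb' xd' y' ->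
    exists T' : R,
      IsTargetTime (fun t => xb' t + xd' t) (alpha * ainf) T' /\
      psi * y' T' + T' < psi * y T + T.
Proof.
  intros xb' xd' y' Hsol'.
  assert (Hs1 : forall t, 0 <= t -> 0 <= sigma t <= 1) by (destruct Hadm; auto).
  assert (Hsl1 := adm_list sigma Hadm).
  assert (Hs2 : forall t, 0 <= t -> 0 <= threshold tauhat t <= 1) by (intros; apply thr_range).
  assert (Hsl2 := thr_list tauhat).
  assert (Hle : forall t, 0 < t -> continuity_pt sigma t -> continuity_pt (threshold tauhat) t ->
                sigma t <= threshold tauhat t).
  { intros t Ht Hc1 Hc2. destruct tauhat as [r|]; simpl.
    - destruct (Rlt_dec t r). specialize (Hs1 t ltac:(lra)); lra.
      destruct (Req_dec t r). subst. exfalso; apply (thr_not_cont r); auto.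
      apply Rnot_lt_le. intro Hp. destruct Htau as [Hub _].
      assert (t <= r) by (apply Hub; split; lra). lra.
    - specialize (Hs1 t ltac:(lra)); lra. }
  assert (Hcmp := cmp_all lambda beta Gamma d0 xd0 b d sigma (threshold tauhat) xb xd y xb' xd' y'
                    Hlam Hbeta HG Hx0 Hd0 Hbd Hs1 Hsl1 Hsol Hs2 Hsl2 Hsol' Hle).
  assert (Hxle : forall t, 0 <= t -> xb t + xd t <= xb' t + xd' t).
  { intros t Ht. pose proof (Hcmp 0%nat t ltac:(lia) Ht). pose proof (Hcmp 1%nat t ltac:(lia) Ht).
    simpl in *. lra. }
  destruct (target_construct _ _ _ _ HT Hxle) as [T' [HT' HTT']].
  exists T'. split; auto.
  assert (Hy' : y' T' <= rho_max).
  { destruct Hrho as [Hub _]. apply Hub. destruct tauhat as [r|].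
    - exists r, xb', xd', y', T'. split.
      + destruct Htau as [Hu Hl]. destruct (classic (exists t, 0 <= t /\ sigma t > 0)) as [[t Ht]|Hn].
        * assert (t <= r) by (apply Hu; auto). lra.
        * assert (r <= r - 1). { apply Hl. intros t Ht. exfalso. apply Hn. exists t; auto. } lra.
      + split; auto.
    - assert (HT0 := target_ge0 _ _ _ HT').
      destruct (extend lambda beta Gamma d0 xd0 b d xb' xd' y' Hlam Hbeta HG Hx0 Hd0 Hbd Hsol' (T' + 1) ltac:(lra))
        as [xb2 [xd2 [y2 [Hsol2 Heq]]]].
      exists (T' + 1), xb2, xd2, y2, T'. split. lra. split. auto. split.
      + apply (target_transfer (fun t => xb' t + xd' t) _ _ _ (T' + 1)); auto.
        destruct Hsol' as [_ [_ [_ [Hc1 [Hc2 _]]]]]. apply cplus; auto. lra.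
        intros t Ht. destruct (Heq t Ht) as [e1 [e2 _]]. rewrite e1, e2; auto.
      + destruct (Heq T' ltac:(lra)) as [_ [_ e3]]. auto. }
  nra.
Qed.
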